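(* Fix $\beta>0$ and $0<t_0<t<\infty$. Let $(C_n)_{n\ge1}$ be the solution on $[t_0,t]$ of $$C_1\equiv1,\qquad \dot C_n=(n-1)B\,C_n+\frac{n\Gamma}{2}\sum_{j=1}^{n-1}C_jC_{n-j}\quad(n\ge2),\qquad C_n(t_0)=0\ (n\ge2)$$ (the coefficient equations of $\Theta_t=\Gamma(z^2\Theta^2)_z+Bz\Theta_z$, $\Theta(t_0,\cdot)=1$), and set $\Theta(t,z)=\sum_{n\ge1}C_n(t)z^{n-1}$. Then for every $k\in\mathbb{N}$ and every $z\ge0$ with $e\,z\,\tau_k(t_0,t)<1$, $$\Theta(t,z)\le\frac{-1}{\tau_k(t_0,t)\,z}\,W\!\left(-\tau_k(t_0,t)\,z\right),\qquad \tau_k(t_0,t)=\int_{t_0}^t\Gamma(s)\exp\!\Big(\frac{k+1}{k}\int_s^tB(s')\,ds'\Big)ds .$$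
   Context: $g(s)=-\frac{s}{4\pi}\int_s^\infty K_0'''(r)\frac{r}{\sqrt{r^2-s^2}}dr$ for $s>0$ (a positive function), $K_0$ the modified Bessel function of the second kind of order $0$. $\Gamma(t)=\frac{\beta\pi}{4}t^2g(t)$ and $B(t)=\frac{\beta}{2}g(t)$. $W$ is the principal branch of the Lambert $W$ function, with $-W(-x)/x=\sum_{n\ge1}\frac{n^{n-1}}{n!}x^{n-1}$ for $0\le x\le1/e$ (value $1$ at $x=0$). *)

(* Defs.v *)
From Stdlib Require Import Reals Lra ClassicalEpsilon.
Open Scope R_scope.

Definition RInt (f : R -> R) (a b : R) : R :=
  epsilon (inhabits 0)
    (fun l => exists pr : Riemann_integrable f a b, RiemannInt pr = l).

Definition improper_int_open (f : R -> R) (a l : R) : Prop :=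
  forall eps, 0 < eps -> exists d M, 0 < d /\
    forall a' b, a < a' < a + d -> M < b ->
      exists pr : Riemann_integrable f a' b, Rabs (RiemannInt pr - l) < eps.

Definition IntOpen (f : R -> R) (a : R) : R :=
  epsilon (inhabits 0) (fun l => improper_int_open f a l).

Definition K0 (r : R) : R := IntOpen (fun u => exp (- r * cosh u)) 0.

Definition is_deriv_pos (f f' : R -> R) : Prop :=
  forall x, 0 < x -> derivable_pt_lim f x (f' x).

Definition deriv_pos (f : R -> R) : R -> R :=
  epsilon (inhabits (fun _ => 0)) (fun f' => is_deriv_pos f f').

Definition K0''' : R -> R := deriv_pos (deriv_pos (deriv_pos K0)).

Definition g (s : R) : R :=
  - s / (4 * PI) * IntOpen (fun r => K0''' r * r / sqrt (r ^ 2 - s ^ 2)) s.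

Definition Gam (beta s : R) : R := beta * PI / 4 * s ^ 2 * g s.
Definition Bf (beta s : R) : R := beta / 2 * g s.

Definition LambertW (x : R) : R :=
  epsilon (inhabits 0) (fun w => -1 <= w /\ w * exp w = x).

(* x |-> -W(-x)/x, with value 1 at x = 0 (its continuous extension). *)
Definition negWq (x : R) : R :=
  if Req_EM_T x 0 then 1 else - LambertW (- x) / x.

Definition tau (beta : R) (k : nat) (t0 t : R) : R :=
  RInt (fun s => Gam beta s * exp ((INR k + 1) / INR k * RInt (Bf beta) s t)) t0 t.

Definition cont_on_at (f : R -> R) (a b s : R) : Prop :=
  limit1_in f (fun x => a <= x <= b) (f s) s.

(* Main.v *)
Require Import Defs.
From Stdlib Require Import Reals Lra Lia Psatz ClassicalEpsilon Arith FunctionalExtensionality.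
From Coquelicot Require Import Coquelicot.
Open Scope R_scope.

Lemma RInt_DefsRInt (f : R -> R) a b : Riemann_integrable f a b -> Defs.RInt f a b = RInt f a b.
Proof.
  intros pr. unfold Defs.RInt.
  destruct (epsilon_spec (inhabits 0) (fun l => exists pr : Riemann_integrable f a b, RiemannInt pr = l)) as [pr' H].
  - exists (RiemannInt pr); exists pr; reflexivity.
  - rewrite <- H, (RInt_Reals f a b pr'). reflexivity.
Qed.

Definition Imp (f : R -> R) : R := Lim_seq (fun n => RInt f 0 (INR n)).

Lemma exRI (f : R -> R) a b : (forall x, 0 <= x -> continuous f x) -> 0 <= a -> 0 <= b -> ex_RInt f a b.
Proof.
  intros Hc Ha Hb. apply (ex_RInt_continuous (V:=R_CompleteNormedModule)). intros z Hz. apply Hc.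
  destruct Hz as [Hz _]. apply Rle_trans with (2 := Hz). unfold Rmin; destruct Rle_dec; lra.
Qed.

Lemma RInt_Chasles_R (f : R -> R) a b c : ex_RInt f a b -> ex_RInt f b c ->
  RInt f a c = RInt f a b + RInt f b c.
Proof. intros H1 H2. rewrite <- (RInt_Chasles (V:=R_CompleteNormedModule) f a b c H1 H2). reflexivity. Qed.

Lemma RInt_mono_b (f : R -> R) b b' : (forall x, 0 <= x -> continuous f x) ->
  (forall x, 0 <= x -> 0 <= f x) -> 0 <= b -> b <= b' -> RInt f 0 b <= RInt f 0 b'.
Proof.
  intros Hc Hp Hb Hbb.
  rewrite (RInt_Chasles_R f 0 b b'); try (apply exRI; auto; lra).
  assert (0 <= RInt f b b'). { apply RInt_ge_0; auto. apply exRI; auto; lra. intros; apply Hp; lra. }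
  lra.
Qed.

Lemma RInt_nonneg0 (f : R -> R) b : (forall x, 0 <= x -> continuous f x) ->
  (forall x, 0 <= x -> 0 <= f x) -> 0 <= b -> 0 <= RInt f 0 b.
Proof.
  intros Hc Hp Hb. apply RInt_ge_0; auto. apply exRI; auto; lra. intros; apply Hp; lra.
Qed.

Lemma Imp_lim (f : R -> R) K : (forall x, 0 <= x -> continuous f x) ->
  (forall x, 0 <= x -> 0 <= f x) -> (forall b, 0 <= b -> RInt f 0 b <= K) ->
  is_lim_seq (fun n => RInt f 0 (INR n)) (Imp f).
Proof.
  intros Hc Hp HK.
  assert (Hinc : forall n, RInt f 0 (INR n) <= RInt f 0 (INR (S n))).
  { intros n. apply RInt_mono_b; auto. apply pos_INR. rewrite S_INR; lra. }
  pose proof (Lim_seq_correct _ (ex_lim_seq_incr _ Hinc)) as H.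
  unfold Imp.
  assert (Hup : Rbar_le (Lim_seq (fun n => RInt f 0 (INR n))) K).
  { apply is_lim_seq_le with (2 := H) (3 := is_lim_seq_const K). intros n; apply HK, pos_INR. }
  assert (Hlo : Rbar_le 0 (Lim_seq (fun n => RInt f 0 (INR n)))).
  { apply is_lim_seq_le with (2 := is_lim_seq_const 0) (3 := H). intros n; apply RInt_nonneg0; auto; apply pos_INR. }
  destruct (Lim_seq (fun n => RInt f 0 (INR n))) eqn:E; simpl in *; try contradiction.
  exact H.
Qed.

Lemma Imp_ge_RInt (f : R -> R) K b : (forall x, 0 <= x -> continuous f x) ->
  (forall x, 0 <= x -> 0 <= f x) -> (forall b, 0 <= b -> RInt f 0 b <= K) -> 0 <= b ->
  RInt f 0 b <= Imp f.
Proof.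
  intros Hc Hp HK Hb.
  pose proof (Imp_lim f K Hc Hp HK) as H.
  assert (Rbar_le (RInt f 0 b) (Imp f)).
  { apply is_lim_seq_le_loc with (2 := is_lim_seq_const (RInt f 0 b)) (3 := H).
    destruct (nfloor_ex b Hb) as [N HN]. exists (S N). intros n Hn.
    apply RInt_mono_b; auto. apply le_INR in Hn. rewrite S_INR in Hn. lra. }
  exact H0.
Qed.

Lemma Imp_tail (f : R -> R) K : (forall x, 0 <= x -> continuous f x) ->
  (forall x, 0 <= x -> 0 <= f x) -> (forall b, 0 <= b -> RInt f 0 b <= K) ->
  forall eps, 0 < eps -> exists M, 0 <= M /\ forall b, M <= b -> Imp f - eps < RInt f 0 b.
Proof.
  intros Hc Hp HK eps He.
  pose proof (Imp_lim f K Hc Hp HK) as H.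
  apply is_lim_seq_Reals in H.
  destruct (H eps He) as [N HN].
  exists (INR N). split. apply pos_INR. intros b Hb.
  specialize (HN N (Nat.le_refl _)). unfold Rdist in HN.
  pose proof (RInt_mono_b f (INR N) b Hc Hp (pos_INR _) Hb).
  apply Rabs_def2 in HN. lra.
Qed.

Lemma Imp_nonneg (f : R -> R) K : (forall x, 0 <= x -> continuous f x) ->
  (forall x, 0 <= x -> 0 <= f x) -> (forall b, 0 <= b -> RInt f 0 b <= K) -> 0 <= Imp f.
Proof.
  intros Hc Hp HK. apply Rle_trans with (RInt f 0 0).
  rewrite RInt_point; right; reflexivity.
  apply (Imp_ge_RInt f K); auto; lra.
Qed.

Lemma RInt_plus_R (f g : R -> R) a b : ex_RInt f a b -> ex_RInt g a b ->
  RInt (fun x => f x + g x) a b = RInt f a b + RInt g a b.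
Proof. intros H1 H2. exact (RInt_plus (V:=R_CompleteNormedModule) f g a b H1 H2). Qed.
Lemma RInt_minus_R (f g : R -> R) a b : ex_RInt f a b -> ex_RInt g a b ->
  RInt (fun x => f x - g x) a b = RInt f a b - RInt g a b.
Proof. intros H1 H2. exact (RInt_minus (V:=R_CompleteNormedModule) f g a b H1 H2). Qed.
Lemma RInt_scal_R (f : R -> R) a b l : ex_RInt f a b ->
  RInt (fun x => l * f x) a b = l * RInt f a b.
Proof. intros H1. exact (RInt_scal (V:=R_CompleteNormedModule) f a b l H1). Qed.

Lemma exp_taylor2 y : 0 <= y -> 1 + y + y^2/2 <= exp y.
Proof.
  intros Hy. pose proof (exp_ge_taylor y 2 Hy). simpl in H.
  unfold Factorial.fact in H. simpl in H. lra.
Qed.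

Lemma cosh_ge u : 0 <= u -> u <= cosh u /\ 0 <= cosh u.
Proof.
  intros Hu. unfold cosh. pose proof (exp_taylor2 u Hu). pose proof (exp_pos (-u)).
  split; nra.
Qed.

Lemma cosh_nonneg u : 0 <= cosh u.
Proof. unfold cosh. pose proof (exp_pos u). pose proof (exp_pos (-u)). lra. Qed.

Lemma pow_le_fact_exp y m : 0 <= y -> y ^ m <= INR (Factorial.fact m) * exp y.
Proof.
  intros Hy. pose proof (exp_ge_taylor y m Hy).
  assert (Hf : 0 < INR (Factorial.fact m)) by (apply lt_0_INR, Factorial.lt_O_fact).
  assert (y ^ m / INR (Factorial.fact m) <= exp y).
  { apply Rle_trans with (2 := H). destruct m. simpl. unfold Factorial.fact. simpl. lra.
    rewrite tech5. assert (0 <= sum_f_R0 (fun k => y ^ k / INR (Factorial.fact k)) m).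
    { apply cond_pos_sum. intros n. apply Rmult_le_pos. apply pow_le; auto.
      apply Rlt_le, Rinv_0_lt_compat, lt_0_INR, Factorial.lt_O_fact. }
    lra. }
  replace (y ^ m) with (y ^ m / INR (Factorial.fact m) * INR (Factorial.fact m)) by (field; lra).
  rewrite (Rmult_comm (INR _)). apply Rmult_le_compat_r; lra.
Qed.

Lemma exp_le x y : x <= y -> exp x <= exp y.
Proof. intros [H|H]. left; apply exp_increasing; auto. subst; lra. Qed.

Definition ee (m : nat) (r u : R) := cosh u ^ m * exp (- r * cosh u).
Definition kk (m : nat) (r : R) := Imp (ee m r).

Lemma ee_cont m r u : continuous (ee m r) u.
Proof. apply (ex_derive_continuous (V:=R_NormedModule)). unfold ee, cosh. auto_derive. auto. Qed.

Lemma ee_nonneg m r u : 0 <= ee m r u.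
Proof. unfold ee. apply Rmult_le_pos. apply pow_le, cosh_nonneg. apply Rlt_le, exp_pos. Qed.

Lemma ee_anti m r r' u : r <= r' -> ee m r' u <= ee m r u.
Proof.
  intros H. unfold ee. apply Rmult_le_compat_l. apply pow_le, cosh_nonneg.
  apply exp_le. pose proof (cosh_nonneg u). nra.
Qed.

Lemma ee_bound m r u : 0 < r -> 0 <= u ->
  ee m r u <= INR (Factorial.fact m) * (2 / r) ^ m * exp (- (r / 2) * u).
Proof.
  intros Hr Hu. unfold ee. destruct (cosh_ge u Hu) as [H1 H2].
  set (c := cosh u) in *. set (y := r * c / 2).
  assert (Hy : 0 <= y) by (unfold y; apply Rmult_le_pos; [apply Rmult_le_pos; lra | lra]).
  assert (Hc : c = 2 / r * y) by (unfold y; field; lra).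
  rewrite Hc, Rpow_mult_distr.
  pose proof (pow_le_fact_exp y m Hy).
  assert (Hpr : 0 <= (2/r)^m) by (apply pow_le; apply Rlt_le, Rdiv_lt_0_compat; lra).
  assert (exp (- r * (2 / r * y)) <= exp (-y) * exp (- (r / 2) * u)).
  { rewrite <- exp_plus. apply exp_le. unfold y. replace (- r * (2 / r * (r * c / 2))) with (- (r * c)) by (field; lra). nra. }
  assert (0 <= exp (-y)) by (apply Rlt_le, exp_pos).
  assert (Hee : exp y * exp (-y) = 1) by (rewrite <- exp_plus, Rplus_opp_r, exp_0; reflexivity).
  assert (0 <= exp (- (r / 2) * u)) by (apply Rlt_le, exp_pos).
  apply Rle_trans with ((2 / r) ^ m * y ^ m * (exp (- y) * exp (- (r / 2) * u))).
  apply Rmult_le_compat_l; auto. apply Rmult_le_pos; auto; apply pow_le; auto.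
  apply Rle_trans with ((2 / r) ^ m * (INR (Factorial.fact m) * exp y) * (exp (- y) * exp (- (r / 2) * u))).
  apply Rmult_le_compat_r. apply Rmult_le_pos; auto. apply Rmult_le_compat_l; auto.
  right. replace ((2 / r) ^ m * (INR (Factorial.fact m) * exp y) * (exp (- y) * exp (- (r / 2) * u))) with
    (INR (Factorial.fact m) * (2 / r) ^ m * exp (- (r / 2) * u) * (exp y * exp (-y))) by ring.
  rewrite Hee. ring.
Qed.

Lemma RInt_expneg r b : 0 < r -> 0 <= b -> RInt (fun u => exp (- (r / 2) * u)) 0 b <= 2 / r.
Proof.
  intros Hr Hb.
  pose (F := fun u => - (2/r) * exp (- (r/2) * u)).
  assert (His : is_RInt (fun u => exp (- (r / 2) * u)) 0 b (minus (F b) (F 0))).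
  { apply (is_RInt_derive (V:=R_CompleteNormedModule) F).
    - intros x _. unfold F. auto_derive. auto. simpl. field. lra.
    - intros x _. apply (ex_derive_continuous (V:=R_NormedModule)). auto_derive. auto. }
  rewrite (is_RInt_unique _ _ _ _ His). unfold minus, plus, opp, F; simpl.
  rewrite Rmult_0_r, exp_0. pose proof (exp_pos (- (r/2) * b)).
  assert (0 < 2 / r) by (apply Rdiv_lt_0_compat; lra). nra.
Qed.

Definition Kb (m : nat) (r : R) := INR (Factorial.fact m) * (2 / r) ^ m * (2 / r).

Lemma ee_cont' m r : forall x, 0 <= x -> continuous (ee m r) x.
Proof. intros; apply ee_cont. Qed.
Lemma ee_nonneg' m r : forall x, 0 <= x -> 0 <= ee m r x.
Proof. intros; apply ee_nonneg. Qed.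

Lemma I_bound m r b : 0 < r -> 0 <= b -> RInt (ee m r) 0 b <= Kb m r.
Proof.
  intros Hr Hb. unfold Kb.
  set (A := INR (Factorial.fact m) * (2 / r) ^ m).
  assert (HA : 0 <= A) by (apply Rmult_le_pos; [apply pos_INR | apply pow_le; apply Rlt_le, Rdiv_lt_0_compat; lra]).
  apply Rle_trans with (RInt (fun u => A * exp (- (r / 2) * u)) 0 b).
  - apply RInt_le; auto. apply exRI; auto using ee_cont'; lra.
    apply (ex_RInt_continuous (V:=R_CompleteNormedModule)). intros z _. apply (ex_derive_continuous (V:=R_NormedModule)). auto_derive. auto.
    intros x Hx. apply ee_bound; lra.
  - rewrite RInt_scal_R. apply Rmult_le_compat_l; auto. apply RInt_expneg; auto.
    apply (ex_RInt_continuous (V:=R_CompleteNormedModule)). intros z _. apply (ex_derive_continuous (V:=R_NormedModule)). auto_derive. auto.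
Qed.

Lemma kk_lim m r : 0 < r -> is_lim_seq (fun n => RInt (ee m r) 0 (INR n)) (kk m r).
Proof. intros Hr. apply (Imp_lim _ (Kb m r)); auto using ee_cont', ee_nonneg'. intros; apply I_bound; auto. Qed.

Lemma kk_ge m r b : 0 < r -> 0 <= b -> RInt (ee m r) 0 b <= kk m r.
Proof. intros Hr Hb. apply (Imp_ge_RInt _ (Kb m r)); auto using ee_cont', ee_nonneg'. intros; apply I_bound; auto. Qed.

Lemma kk_nonneg m r : 0 < r -> 0 <= kk m r.
Proof. intros Hr. apply (Imp_nonneg _ (Kb m r)); auto using ee_cont', ee_nonneg'. intros; apply I_bound; auto. Qed.

Lemma kk_tail m r : 0 < r -> forall eps, 0 < eps -> exists M, 0 <= M /\ forall b, M <= b -> kk m r - eps < RInt (ee m r) 0 b.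
Proof. intros Hr. apply (Imp_tail _ (Kb m r)); auto using ee_cont', ee_nonneg'. intros; apply I_bound; auto. Qed.

Lemma kk_le_Kb m r : 0 < r -> kk m r <= Kb m r.
Proof.
  intros Hr. pose proof (kk_lim m r Hr).
  assert (Rbar_le (kk m r) (Kb m r)).
  { apply is_lim_seq_le with (2 := H) (3 := is_lim_seq_const _). intros; apply I_bound; auto; apply pos_INR. }
  exact H0.
Qed.

Lemma kk_anti m r r' : 0 < r -> r <= r' -> kk m r' <= kk m r.
Proof.
  intros Hr Hrr. pose proof (kk_lim m r Hr). pose proof (kk_lim m r' ltac:(lra)).
  assert (Rbar_le (kk m r') (kk m r)).
  { apply is_lim_seq_le with (2 := H0) (3 := H). intros n. apply RInt_le.
    apply pos_INR. apply exRI; auto using ee_cont'; try lra; apply pos_INR.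
    apply exRI; auto using ee_cont'; try lra; apply pos_INR.
    intros; apply ee_anti; auto. }
  exact H1.
Qed.

Lemma cont_of_ex_derive (f : R -> R) x : ex_derive f x -> continuity_pt f x.
Proof. intros H. apply continuity_pt_filterlim. apply (ex_derive_continuous (V:=R_NormedModule)) in H. exact H. Qed.

Lemma Rabs_le_inv x y : Rabs x <= y -> - y <= x <= y.
Proof. unfold Rabs; destruct Rcase_abs; intros; lra. Qed.

Lemma mvt_exp y : exists c, Rabs c <= Rabs y /\ exp y - 1 = exp c * y.
Proof.
  destruct (MVT_gen exp 0 y exp) as [c [Hc Heq]].
  - intros x _. apply is_derive_Reals, derivable_pt_lim_exp.
  - intros x _. apply derivable_continuous_pt, derivable_pt_exp.
  - exists c. split.
    + unfold Rmin, Rmax in Hc. destruct Rle_dec; unfold Rabs; repeat destruct Rcase_abs; lra.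
    + rewrite exp_0 in Heq. lra.
Qed.

Lemma exp_taylor_abs y : Rabs (exp y - 1 - y) <= y ^ 2 * exp (Rabs y).
Proof.
  destruct (MVT_gen (fun z => exp z - 1 - z) 0 y (fun z => exp z - 1)) as [c [Hc Heq]].
  - intros x _. auto_derive. auto. simpl. ring.
  - intros x _. apply cont_of_ex_derive. auto_derive. auto.
  - rewrite exp_0 in Heq. replace (exp y - 1 - y) with (exp y - 1 - y - (1 - 1 - 0)) by ring.
    rewrite Heq. destruct (mvt_exp c) as [d [Hd Hde]]. rewrite Hde.
    assert (Hcy : Rabs c <= Rabs y).
    { unfold Rmin, Rmax in Hc. destruct Rle_dec; unfold Rabs; repeat destruct Rcase_abs; lra. }
    assert (exp d <= exp (Rabs y)).
    { apply exp_le. apply Rle_trans with (Rabs d). apply RRle_abs. lra. }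
    rewrite Rminus_0_r, !Rabs_mult, (Rabs_pos_eq (exp d)) by (apply Rlt_le, exp_pos).
    rewrite <- Rsqr_pow2, Rsqr_abs. unfold Rsqr.
    pose proof (Rabs_pos c). pose proof (Rabs_pos y). pose proof (exp_pos d).
    apply Rle_trans with (exp (Rabs y) * Rabs y * Rabs y).
    apply Rmult_le_compat; try nra. lra.
Qed.

Lemma ee_taylor m r h u : Rabs (ee m (r + h) u - ee m r u + h * ee (S m) r u) <= h ^ 2 * ee (S (S m)) (r - Rabs h) u.
Proof.
  unfold ee. set (c := cosh u). assert (Hc : 0 <= c) by apply cosh_nonneg.
  replace (c ^ m * exp (- (r + h) * c) - c ^ m * exp (- r * c) + h * (c ^ S m * exp (- r * c)))
    with (c ^ m * exp (- r * c) * (exp (- h * c) - 1 - (- h * c))).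
  2:{ replace (- (r + h) * c) with (- r * c + - h * c) by ring. rewrite exp_plus. simpl. ring. }
  rewrite Rabs_mult, (Rabs_pos_eq (c ^ m * exp (- r * c))).
  2:{ apply Rmult_le_pos. apply pow_le; auto. apply Rlt_le, exp_pos. }
  apply Rle_trans with (c ^ m * exp (- r * c) * ((- h * c) ^ 2 * exp (Rabs (- h * c)))).
  apply Rmult_le_compat_l. apply Rmult_le_pos. apply pow_le; auto. apply Rlt_le, exp_pos.
  apply exp_taylor_abs.
  right. rewrite Rabs_mult, Rabs_Ropp, (Rabs_pos_eq c Hc).
  replace (- (r - Rabs h) * c) with (- r * c + Rabs h * c) by ring. rewrite exp_plus. simpl. ring.
Qed.

Lemma ee_exRI m r a b : 0 <= a -> 0 <= b -> ex_RInt (ee m r) a b.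
Proof. intros; apply exRI; auto using ee_cont'. Qed.

Lemma kk_taylor m r h : 0 < r -> Rabs h < r / 2 ->
  Rabs (kk m (r + h) - kk m r + h * kk (S m) r) <= h ^ 2 * kk (S (S m)) (r / 2).
Proof.
  intros Hr Hh.
  assert (Hrh : 0 < r + h) by (unfold Rabs in Hh; destruct Rcase_abs; lra).
  set (B := h ^ 2 * kk (S (S m)) (r / 2)).
  assert (HD : forall b, 0 <= b -> Rabs (RInt (ee m (r+h)) 0 b - RInt (ee m r) 0 b + h * RInt (ee (S m) r) 0 b) <= B).
  { intros b Hb.
    pose proof (ee_exRI m (r+h) 0 b ltac:(lra) Hb) as E1.
    pose proof (ee_exRI m r 0 b ltac:(lra) Hb) as E2.
    pose proof (ee_exRI (S m) r 0 b ltac:(lra) Hb) as E3.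
    set (f := fun x => ee m (r + h) x - ee m r x + h * ee (S m) r x).
    assert (E12 : ex_RInt (fun x => ee m (r + h) x - ee m r x) 0 b) by
      exact (ex_RInt_minus (V:=R_CompleteNormedModule) _ _ _ _ E1 E2).
    assert (E3' : ex_RInt (fun x => h * ee (S m) r x) 0 b) by
      exact (ex_RInt_scal (V:=R_CompleteNormedModule) _ _ _ h E3).
    assert (Hf : ex_RInt f 0 b) by exact (ex_RInt_plus (V:=R_CompleteNormedModule) _ _ _ _ E12 E3').
    assert (Eq : RInt (ee m (r+h)) 0 b - RInt (ee m r) 0 b + h * RInt (ee (S m) r) 0 b = RInt f 0 b).
    { unfold f. rewrite (RInt_plus_R _ _ _ _ E12 E3'), (RInt_minus_R _ _ _ _ E1 E2), (RInt_scal_R _ _ _ _ E3). reflexivity. }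
    rewrite Eq.
    set (g := fun x => h ^ 2 * ee (S (S m)) (r - Rabs h) x).
    assert (Hg : ex_RInt g 0 b).
    { unfold g. apply (ex_RInt_scal (V:=R_CompleteNormedModule)); apply ee_exRI; lra. }
    assert (Hgb : RInt g 0 b <= B).
    { unfold g, B. rewrite RInt_scal_R by (apply ee_exRI; lra). apply Rmult_le_compat_l.
      apply pow2_ge_0. apply Rle_trans with (kk (S (S m)) (r - Rabs h)). apply kk_ge; lra.
      apply kk_anti; lra. }
    apply Rabs_le. split.
    - assert (RInt (fun x => - g x) 0 b <= RInt f 0 b).
      { apply RInt_le; auto. apply (ex_RInt_opp (V:=R_CompleteNormedModule)) in Hg. exact Hg.
        intros x _. pose proof (ee_taylor m r h x). apply Rabs_le_inv in H. unfold f, g. lra. }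
      rewrite (RInt_opp (V:=R_CompleteNormedModule)) in H by auto. unfold opp in H; simpl in H. lra.
    - assert (RInt f 0 b <= RInt g 0 b).
      { apply RInt_le; auto. intros x _. pose proof (ee_taylor m r h x). apply Rabs_le_inv in H. unfold f, g. lra. }
      lra. }
  assert (HL : is_lim_seq (fun n => RInt (ee m (r+h)) 0 (INR n) - RInt (ee m r) 0 (INR n) + h * RInt (ee (S m) r) 0 (INR n))
     (kk m (r + h) - kk m r + h * kk (S m) r)).
  { apply is_lim_seq_plus'. apply is_lim_seq_minus'; apply kk_lim; auto.
    apply (is_lim_seq_scal_l _ h (kk (S m) r)). apply kk_lim; auto. }
  apply Rabs_le. split.
  - assert (Rbar_le (- B) (kk m (r + h) - kk m r + h * kk (S m) r)).
    { apply is_lim_seq_le with (2 := is_lim_seq_const _) (3 := HL). intros n.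
      pose proof (HD (INR n) (pos_INR n)). apply Rabs_le_inv in H. lra. }
    exact H.
  - assert (Rbar_le (kk m (r + h) - kk m r + h * kk (S m) r) B).
    { apply is_lim_seq_le with (2 := HL) (3 := is_lim_seq_const _). intros n.
      pose proof (HD (INR n) (pos_INR n)). apply Rabs_le_inv in H. lra. }
    exact H.
Qed.

Lemma kk_deriv m r : 0 < r -> derivable_pt_lim (kk m) r (- kk (S m) r).
Proof.
  intros Hr eps He.
  set (B := kk (S (S m)) (r / 2)).
  assert (HB : 0 <= B) by (apply kk_nonneg; lra).
  assert (Hd : 0 < Rmin (r / 2) (eps / (B + 1))).
  { apply Rmin_pos. lra. apply Rdiv_lt_0_compat; lra. }
  pose proof (Rmin_l (r / 2) (eps / (B + 1))) as Hm1. pose proof (Rmin_r (r / 2) (eps / (B + 1))) as Hm2.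
  set (de := Rmin (r / 2) (eps / (B + 1))) in *.
  exists (mkposreal de Hd). intros h Hh0 Hh. change (Rabs h < de) in Hh.
  assert (Hh1 : Rabs h < r / 2) by lra.
  assert (Hh2 : Rabs h < eps / (B + 1)) by lra.
  pose proof (kk_taylor m r h Hr Hh1).
  replace ((kk m (r + h) - kk m r) / h - - kk (S m) r) with ((kk m (r + h) - kk m r + h * kk (S m) r) / h) by (field; exact Hh0).
  unfold Rdiv. rewrite Rabs_mult, Rabs_inv.
  assert (Hah : 0 < Rabs h) by (apply Rabs_pos_lt; exact Hh0).
  apply Rle_lt_trans with (h ^ 2 * B * / Rabs h).
  apply Rmult_le_compat_r. left; apply Rinv_0_lt_compat; auto. exact H.
  rewrite <- Rsqr_pow2, Rsqr_abs. unfold Rsqr.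
  replace (Rabs h * Rabs h * B * / Rabs h) with (Rabs h * B) by (field; lra).
  apply Rle_lt_trans with (eps / (B + 1) * B). apply Rmult_le_compat_r; lra.
  apply Rlt_le_trans with (eps / (B + 1) * (B + 1)). apply Rmult_lt_compat_l. apply Rdiv_lt_0_compat; lra. lra.
  right; field; lra.
Qed.

Lemma kk_cont m r : 0 < r -> continuity_pt (kk m) r.
Proof. intros Hr. apply derivable_continuous_pt. exists (- kk (S m) r). apply kk_deriv; auto. Qed.

Lemma improper_unique f a l1 l2 : improper_int_open f a l1 -> improper_int_open f a l2 -> l1 = l2.
Proof.
  intros H1 H2. destruct (Req_dec l1 l2) as [E|E]; auto. exfalso.
  assert (He : 0 < Rabs (l1 - l2) / 2) by (apply Rdiv_lt_0_compat; [apply Rabs_pos_lt; lra | lra]).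
  destruct (H1 _ He) as [d1 [M1 [Hd1 HH1]]]. destruct (H2 _ He) as [d2 [M2 [Hd2 HH2]]].
  set (a' := a + Rmin d1 d2 / 2). set (b := Rmax M1 M2 + 1).
  assert (Hm : 0 < Rmin d1 d2) by (apply Rmin_pos; auto).
  pose proof (Rmin_l d1 d2). pose proof (Rmin_r d1 d2). pose proof (Rmax_l M1 M2). pose proof (Rmax_r M1 M2).
  destruct (HH1 a' b) as [pr1 Hp1]. unfold a'; lra. unfold b; lra.
  destruct (HH2 a' b) as [pr2 Hp2]. unfold a'; lra. unfold b; lra.
  rewrite (RiemannInt_P5 pr1 pr2) in Hp1.
  assert (Rabs (l1 - l2) <= Rabs (RiemannInt pr2 - l1) + Rabs (RiemannInt pr2 - l2)).
  { replace (l1 - l2) with (- (RiemannInt pr2 - l1) + (RiemannInt pr2 - l2)) by ring.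
    eapply Rle_trans. apply Rabs_triang. rewrite Rabs_Ropp. lra. }
  lra.
Qed.

Lemma IntOpen_eq f a l : improper_int_open f a l -> IntOpen f a = l.
Proof.
  intros H. unfold IntOpen.
  pose proof (epsilon_spec (inhabits 0) (fun l => improper_int_open f a l) (ex_intro _ l H)).
  eapply improper_unique; eauto.
Qed.

Lemma K0_eq r : 0 < r -> K0 r = kk 0 r.
Proof.
  intros Hr. unfold K0. apply IntOpen_eq. intros eps He.
  destruct (kk_tail 0 r Hr (eps / 2) ltac:(lra)) as [M0 [HM0 HT]].
  exists (Rmin 1 (eps / 2)), (M0 + 1). split. apply Rmin_pos; lra.
  intros a' b Ha' Hb.
  pose proof (Rmin_l 1 (eps/2)). pose proof (Rmin_r 1 (eps/2)).
  assert (Hext : forall x, ee 0 r x = exp (- r * cosh x)) by (intros; unfold ee; simpl; ring).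
  assert (Hex : ex_RInt (fun u => exp (- r * cosh u)) a' b).
  { apply (ex_RInt_ext (ee 0 r)). intros; apply Hext. apply ee_exRI; lra. }
  exists (ex_RInt_Reals_0 _ _ _ Hex).
  rewrite <- RInt_Reals.
  rewrite <- (RInt_ext (ee 0 r)) by (intros; apply Hext).
  assert (RInt (ee 0 r) 0 a' <= a').
  { apply Rle_trans with (RInt (fun _ => 1) 0 a').
    apply RInt_le. lra. apply ee_exRI; lra. apply ex_RInt_const.
    intros x _. rewrite Hext. replace 1 with (exp 0) by apply exp_0. apply exp_le.
    pose proof (cosh_nonneg x). nra.
    rewrite RInt_const. unfold scal; simpl; unfold mult; simpl. lra. }
  assert (0 <= RInt (ee 0 r) 0 a') by (apply RInt_nonneg0; auto using ee_cont', ee_nonneg'; lra).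
  pose proof (RInt_Chasles_R (ee 0 r) 0 a' b ltac:(apply ee_exRI; lra) ltac:(apply ee_exRI; lra)).
  pose proof (HT b ltac:(lra)). pose proof (kk_ge 0 r b Hr ltac:(lra)).
  apply Rabs_def1; lra.
Qed.

Lemma deriv_pos_eq f f' : is_deriv_pos f f' -> forall x, 0 < x -> deriv_pos f x = f' x.
Proof.
  intros H x Hx. unfold deriv_pos.
  pose proof (epsilon_spec (inhabits (fun _ => 0)) (fun f' => is_deriv_pos f f') (ex_intro _ f' H)).
  eapply uniqueness_limite. apply H0; auto. apply H; auto.
Qed.

Lemma derivable_loc f g x l : 0 < x -> (forall y, 0 < y -> f y = g y) ->
  derivable_pt_lim f x l -> derivable_pt_lim g x l.
Proof.
  intros Hx Hfg H. apply is_derive_Reals. apply is_derive_Reals in H.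
  apply (is_derive_ext_loc f g); auto.
  exists (mkposreal x Hx). intros y Hy. apply Hfg. unfold ball in Hy; simpl in Hy.
  unfold AbsRing_ball, abs, minus, plus, opp in Hy; simpl in Hy.
  apply Rabs_def2 in Hy. lra.
Qed.

Lemma K0'''_eq r : 0 < r -> K0''' r = - kk 3 r.
Proof.
  intros Hr.
  assert (D1 : is_deriv_pos K0 (fun x => - kk 1 x)).
  { intros x Hx. apply derivable_loc with (kk 0); auto. intros; symmetry; apply K0_eq; auto. apply kk_deriv; auto. }
  assert (D2 : is_deriv_pos (deriv_pos K0) (fun x => kk 2 x)).
  { intros x Hx. apply derivable_loc with (fun x => - kk 1 x); auto. intros; symmetry; apply (deriv_pos_eq _ _ D1); auto.
    replace (kk 2 x) with (- - kk 2 x) by ring. apply derivable_pt_lim_opp. apply kk_deriv; auto. }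
  assert (D3 : is_deriv_pos (deriv_pos (deriv_pos K0)) (fun x => - kk 3 x)).
  { intros x Hx. apply derivable_loc with (kk 2); auto. intros; symmetry; apply (deriv_pos_eq _ _ D2); auto.
    apply kk_deriv; auto. }
  unfold K0'''. apply (deriv_pos_eq _ _ D3); auto.
Qed.

Lemma locally_gt s x : s < x -> locally x (fun y => s < y).
Proof.
  intros H. assert (Hp : 0 < x - s) by lra. exists (mkposreal _ Hp). intros y Hy.
  unfold ball in Hy; simpl in Hy. unfold AbsRing_ball, abs, minus, plus, opp in Hy; simpl in Hy.
  apply Rabs_def2 in Hy. lra.
Qed.

Lemma kk_continuous m r : 0 < r -> continuous (kk m) r.
Proof. intros Hr. apply continuity_pt_filterlim. apply kk_cont; auto. Qed.

Definition fs (s w : R) := kk 3 (sqrt (s ^ 2 + w ^ 2)).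
Definition J (s : R) := Imp (fs s).

Lemma sq_pos s w : 0 < s -> 0 < s ^ 2 + w ^ 2.
Proof. intros. nra. Qed.

Lemma sqrt_ge_s s w : 0 < s -> s <= sqrt (s ^ 2 + w ^ 2).
Proof.
  intros Hs. rewrite <- (sqrt_pow2 s) at 1 by lra. apply sqrt_le_1_alt. nra.
Qed.

Lemma fs_cont s w : 0 < s -> continuous (fs s) w.
Proof.
  intros Hs. unfold fs. apply (continuous_comp (fun w => sqrt (s^2 + w^2)) (kk 3)).
  apply (ex_derive_continuous (V:=R_NormedModule)). auto_derive. apply sq_pos; auto.
  apply kk_continuous. pose proof (sqrt_ge_s s w Hs). lra.
Qed.

Lemma fs_nonneg s w : 0 < s -> 0 <= fs s w.
Proof. intros Hs. apply kk_nonneg. pose proof (sqrt_ge_s s w Hs). lra. Qed.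

Lemma fs_le s w : 0 < s -> fs s w <= kk 3 s.
Proof. intros Hs. apply kk_anti; auto. apply sqrt_ge_s; auto. Qed.

Lemma kk3_bound r : 0 < r -> kk 3 r <= 96 / r ^ 4.
Proof.
  intros Hr. eapply Rle_trans. apply kk_le_Kb; auto. unfold Kb. simpl.
  unfold Factorial.fact; simpl. right. field. lra.
Qed.

Lemma fs_le_w s w : 0 < s -> 0 < w -> fs s w <= 96 / w ^ 4.
Proof.
  intros Hs Hw. unfold fs. eapply Rle_trans. apply kk3_bound. pose proof (sqrt_ge_s s w Hs); lra.
  set (q := sqrt (s ^ 2 + w ^ 2)).
  assert (Hq : w <= q). { unfold q. rewrite <- (sqrt_pow2 w) at 1 by lra. apply sqrt_le_1_alt. nra. }
  unfold Rdiv. apply Rmult_le_compat_l. lra. apply Rinv_le_contravar. apply pow_lt; lra.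
  apply pow_incr; lra.
Qed.

Lemma fs_exRI s a b : 0 < s -> ex_RInt (fs s) a b.
Proof. intros Hs. apply (ex_RInt_continuous (V:=R_CompleteNormedModule)). intros; apply fs_cont; auto. Qed.

Lemma RInt_w4 W b : 0 < W -> W <= b -> RInt (fun w => 96 / w ^ 4) W b <= 32 / W ^ 3.
Proof.
  intros HW Hb.
  pose (F := fun w => - (32 / w ^ 3)).
  assert (His : is_RInt (fun w => 96 / w ^ 4) W b (minus (F b) (F W))).
  { apply (is_RInt_derive (V:=R_CompleteNormedModule) F).
    - intros x Hx. unfold Rmin, Rmax in Hx; destruct Rle_dec in Hx; try lra.
      unfold F. auto_derive. apply Rgt_not_eq; unfold Rgt; assert (0 < x) by lra; repeat apply Rmult_lt_0_compat; lra. simpl. field. lra.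
    - intros x Hx. unfold Rmin, Rmax in Hx; destruct Rle_dec in Hx; try lra.
      apply (ex_derive_continuous (V:=R_NormedModule)). auto_derive. apply Rgt_not_eq; unfold Rgt; assert (0 < x) by lra; repeat apply Rmult_lt_0_compat; lra. }
  rewrite (is_RInt_unique _ _ _ _ His). unfold minus, plus, opp, F; simpl.
  assert (0 < 32 / (b * (b * (b * 1)))). { apply Rdiv_lt_0_compat. lra. assert (0 < b) by lra. repeat apply Rmult_lt_0_compat; lra. }
  lra.
Qed.

Lemma fs_tail s W b : 0 < s -> 1 <= W -> W <= b -> RInt (fs s) W b <= 32 / W ^ 3.
Proof.
  intros Hs HW Hb. apply Rle_trans with (RInt (fun w => 96 / w ^ 4) W b). 2: apply RInt_w4; lra.
  apply RInt_le; auto. apply fs_exRI; auto.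
  apply (ex_RInt_continuous (V:=R_CompleteNormedModule)). intros z Hz.
  unfold Rmin, Rmax in Hz; destruct Rle_dec in Hz; try lra.
  apply (ex_derive_continuous (V:=R_NormedModule)). auto_derive. apply Rgt_not_eq; unfold Rgt; assert (0 < z) by lra; repeat apply Rmult_lt_0_compat; lra.
  intros x Hx. apply fs_le_w; lra.
Qed.

Lemma fs_RInt_bound s b : 0 < s -> 0 <= b -> RInt (fs s) 0 b <= kk 3 s + 32.
Proof.
  intros Hs Hb.
  assert (Hsmall : forall c, 0 <= c <= 1 -> RInt (fs s) 0 c <= kk 3 s).
  { intros c Hc. apply Rle_trans with (RInt (fun _ => kk 3 s) 0 c).
    apply RInt_le. lra. apply fs_exRI; auto. apply ex_RInt_const. intros; apply fs_le; auto.
    rewrite RInt_const. unfold scal; simpl; unfold mult; simpl.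
    pose proof (kk_nonneg 3 s Hs). nra. }
  destruct (Rle_dec b 1).
  - pose proof (Hsmall b ltac:(lra)). pose proof (kk_nonneg 3 s Hs). lra.
  - pose proof (RInt_Chasles_R (fs s) 0 1 b (fs_exRI s 0 1 Hs) (fs_exRI s 1 b Hs)).
    pose proof (Hsmall 1 ltac:(lra)). pose proof (fs_tail s 1 b Hs ltac:(lra) ltac:(lra)).
    simpl in H1. lra.
Qed.

Lemma fs_cont' s : 0 < s -> forall x, 0 <= x -> continuous (fs s) x.
Proof. intros; apply fs_cont; auto. Qed.
Lemma fs_nonneg' s : 0 < s -> forall x, 0 <= x -> 0 <= fs s x.
Proof. intros; apply fs_nonneg; auto. Qed.
Lemma fs_bnd' s : 0 < s -> forall b, 0 <= b -> RInt (fs s) 0 b <= kk 3 s + 32.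
Proof. intros; apply fs_RInt_bound; auto. Qed.

Lemma J_nonneg s : 0 < s -> 0 <= J s.
Proof. intros Hs. apply (Imp_nonneg _ _ (fs_cont' s Hs) (fs_nonneg' s Hs) (fs_bnd' s Hs)). Qed.

Lemma J_ge s b : 0 < s -> 0 <= b -> RInt (fs s) 0 b <= J s.
Proof. intros Hs Hb. apply (Imp_ge_RInt _ _ b (fs_cont' s Hs) (fs_nonneg' s Hs) (fs_bnd' s Hs) Hb). Qed.

Lemma J_tail s W : 0 < s -> 1 <= W -> J s - RInt (fs s) 0 W <= 32 / W ^ 3.
Proof.
  intros Hs HW. pose proof (Imp_lim _ _ (fs_cont' s Hs) (fs_nonneg' s Hs) (fs_bnd' s Hs)) as H.
  assert (Rbar_le (J s) (RInt (fs s) 0 W + 32 / W ^ 3)).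
  { apply is_lim_seq_le_loc with (2 := H) (3 := is_lim_seq_const _).
    destruct (nfloor_ex W ltac:(lra)) as [N HN]. exists (S N). intros n Hn.
    apply le_INR in Hn. rewrite S_INR in Hn.
    pose proof (RInt_Chasles_R (fs s) 0 W (INR n) (fs_exRI s 0 W Hs) (fs_exRI s W (INR n) Hs)).
    pose proof (fs_tail s W (INR n) Hs HW ltac:(lra)). lra. }
  assert (J s <= RInt (fs s) 0 W + 32 / W ^ 3) by exact H0. lra.
Qed.

Lemma J_tail' s : 0 < s -> forall eps, 0 < eps -> exists M, 0 <= M /\ forall b, M <= b -> J s - eps < RInt (fs s) 0 b.
Proof. intros Hs. apply (Imp_tail _ _ (fs_cont' s Hs) (fs_nonneg' s Hs) (fs_bnd' s Hs)). Qed.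

Definition phi (s r : R) := K0''' r * r / sqrt (r ^ 2 - s ^ 2).

Lemma phi_cont s r : 0 < s -> s < r -> continuous (phi s) r.
Proof.
  intros Hs Hr.
  apply (continuous_ext_loc (phi s) (fun r => (- kk 3 r) * (r / sqrt (r ^ 2 - s ^ 2))) r).
  - generalize (locally_gt s r Hr). apply filter_imp. intros y Hy. unfold phi.
    rewrite K0'''_eq by lra. unfold Rdiv; rewrite Rmult_assoc; reflexivity.
  - apply (continuous_mult (K:=R_AbsRing) (fun r => - kk 3 r) (fun r => r / sqrt (r ^ 2 - s ^ 2))).
    + apply (continuous_opp (V:=R_NormedModule) (kk 3)). apply kk_continuous; lra.
    + apply (ex_derive_continuous (V:=R_NormedModule)). auto_derive. split. nra.
      split; auto. apply Rgt_not_eq, sqrt_lt_R0. nra.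
Qed.

Lemma sqrt_sub_sq s a : 0 < s -> s <= a -> sqrt (s ^ 2 + sqrt (a ^ 2 - s ^ 2) ^ 2) = a.
Proof.
  intros Hs Ha. rewrite pow2_sqrt by nra. replace (s ^ 2 + (a ^ 2 - s ^ 2)) with (a ^ 2) by ring.
  apply sqrt_pow2; lra.
Qed.

Lemma phi_subst s a b : 0 < s -> s < a -> a <= b ->
  RInt (phi s) a b = - RInt (fs s) (sqrt (a ^ 2 - s ^ 2)) (sqrt (b ^ 2 - s ^ 2)).
Proof.
  intros Hs Ha Hb.
  set (w1 := sqrt (a ^ 2 - s ^ 2)). set (w2 := sqrt (b ^ 2 - s ^ 2)).
  assert (Hw1 : 0 <= w1) by apply sqrt_pos.
  assert (Hw12 : w1 <= w2) by (apply sqrt_le_1_alt; nra).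
  set (gg := fun y => sqrt (s ^ 2 + y ^ 2)). set (dg := fun y => y / sqrt (s ^ 2 + y ^ 2)).
  assert (Hg1 : gg w1 = a) by (apply sqrt_sub_sq; lra).
  assert (Hg2 : gg w2 = b) by (apply sqrt_sub_sq; lra).
  pose proof (RInt_comp (V:=R_CompleteNormedModule) (phi s) gg dg w1 w2) as HC.
  rewrite Hg1, Hg2 in HC. rewrite <- HC.
  - rewrite <- (RInt_opp (V:=R_CompleteNormedModule)) by (apply fs_exRI; auto).
    apply RInt_ext. rewrite Rmin_left, Rmax_right by lra. intros y Hy.
    unfold scal; simpl; unfold mult; simpl. unfold opp; simpl.
    unfold dg, gg, phi, fs.
    set (q := sqrt (s ^ 2 + y ^ 2)).
    assert (Hq : 0 < q) by (apply sqrt_lt_R0; nra).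
    assert (Hq2 : q ^ 2 = s ^ 2 + y ^ 2) by (apply pow2_sqrt; nra).
    rewrite K0'''_eq by lra.
    replace (q ^ 2 - s ^ 2) with (y ^ 2) by lra. rewrite sqrt_pow2 by lra.
    field. lra.
  - intros x Hx. rewrite Rmin_left, Rmax_right in Hx by lra. apply phi_cont; auto.
    apply Rlt_le_trans with a. lra. rewrite <- Hg1. unfold gg.
    apply sqrt_le_1_alt. nra.
  - intros x Hx. rewrite Rmin_left, Rmax_right in Hx by lra. split.
    + unfold gg, dg. auto_derive. nra. simpl. field. apply Rgt_not_eq, sqrt_lt_R0. nra.
    + apply (ex_derive_continuous (V:=R_NormedModule)). unfold dg. auto_derive. split. nra.
      split; auto. apply Rgt_not_eq, sqrt_lt_R0. nra.
Qed.

Lemma phi_exRI s a b : 0 < s -> s < a -> a <= b -> ex_RInt (phi s) a b.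
Proof.
  intros Hs Ha Hb. apply (ex_RInt_continuous (V:=R_CompleteNormedModule)).
  intros z Hz. rewrite Rmin_left, Rmax_right in Hz by lra. apply phi_cont; lra.
Qed.

Lemma g_improper s : 0 < s -> improper_int_open (fun r => K0''' r * r / sqrt (r ^ 2 - s ^ 2)) s (- J s).
Proof.
  intros Hs eps He.
  destruct (J_tail' s Hs (eps / 2) ltac:(lra)) as [W0 [HW0 HT]].
  set (K3 := kk 3 s + 1). assert (HK3 : 0 < K3) by (unfold K3; pose proof (kk_nonneg 3 s Hs); lra).
  set (eta := eps / (2 * K3)). assert (Heta : 0 < eta) by (unfold eta; apply Rdiv_lt_0_compat; lra).
  exists (Rmin 1 (eta ^ 2 / (2 * s + 1))), (s + W0 + 1). split.
  { apply Rmin_pos. lra. apply Rdiv_lt_0_compat. nra. lra. }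
  intros a' b Ha' Hb.
  pose proof (Rmin_l 1 (eta ^ 2 / (2 * s + 1))). pose proof (Rmin_r 1 (eta ^ 2 / (2 * s + 1))).
  assert (Hab : a' <= b) by lra.
  pose proof (phi_exRI s a' b Hs ltac:(lra) Hab) as Hex.
  exists (ex_RInt_Reals_0 _ _ _ Hex).
  rewrite <- RInt_Reals. fold (phi s). rewrite phi_subst by lra.
  set (w1 := sqrt (a' ^ 2 - s ^ 2)). set (w2 := sqrt (b ^ 2 - s ^ 2)).
  assert (Hw1 : 0 <= w1) by apply sqrt_pos.
  assert (Hw1e : w1 < eta).
  { unfold w1. rewrite <- (sqrt_pow2 eta) by lra. apply sqrt_lt_1_alt. split. nra.
    assert (a' - s < eta ^ 2 / (2 * s + 1)) by lra.
    assert ((a' - s) * (2 * s + 1) < eta ^ 2).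
    { apply Rmult_lt_reg_r with (/ (2 * s + 1)). apply Rinv_0_lt_compat; lra.
      replace ((a' - s) * (2 * s + 1) * / (2 * s + 1)) with (a' - s) by (field; lra). exact H1. }
    nra. }
  assert (Hw2 : W0 <= w2).
  { unfold w2. rewrite <- (sqrt_pow2 W0) by lra. apply sqrt_le_1_alt. nra. }
  pose proof (HT w2 Hw2).
  pose proof (J_ge s w2 Hs ltac:(lra)).
  pose proof (RInt_Chasles_R (fs s) 0 w1 w2 (fs_exRI s 0 w1 Hs) (fs_exRI s w1 w2 Hs)).
  assert (0 <= RInt (fs s) 0 w1) by (apply RInt_ge_0; auto; [apply fs_exRI; auto | intros; apply fs_nonneg; auto]).
  assert (RInt (fs s) 0 w1 <= w1 * kk 3 s).
  { apply Rle_trans with (RInt (fun _ => kk 3 s) 0 w1).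
    apply RInt_le; auto. apply fs_exRI; auto. apply ex_RInt_const. intros; apply fs_le; auto.
    rewrite RInt_const. unfold scal; simpl; unfold mult; simpl. lra. }
  assert (w1 * kk 3 s <= eta * K3).
  { unfold K3. pose proof (kk_nonneg 3 s Hs). nra. }
  assert (eta * K3 = eps / 2) by (unfold eta; field; lra).
  apply Rabs_def1; lra.
Qed.

Lemma g_eq s : 0 < s -> g s = s / (4 * PI) * J s.
Proof.
  intros Hs. unfold g. rewrite (IntOpen_eq _ _ (- J s)) by (apply g_improper; auto).
  pose proof PI_RGT_0. field. lra.
Qed.

Lemma g_nonneg s : 0 < s -> 0 <= g s.
Proof.
  intros Hs. rewrite g_eq by auto. apply Rmult_le_pos. apply Rdiv_le_0_compat. lra.
  pose proof PI_RGT_0. lra. apply J_nonneg; auto.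
Qed.

Lemma kk3_lip c x y : 0 < c -> c <= x -> c <= y -> Rabs (kk 3 x - kk 3 y) <= kk 4 c * Rabs (x - y).
Proof.
  intros Hc Hx Hy.
  destruct (MVT_gen (kk 3) y x (fun z => - kk 4 z)) as [z [Hz Heq]].
  - intros z Hz. apply is_derive_Reals, kk_deriv.
    unfold Rmin, Rmax in Hz; destruct Rle_dec in Hz; lra.
  - intros z Hz. apply kk_cont. unfold Rmin, Rmax in Hz; destruct Rle_dec in Hz; lra.
  - rewrite Heq, Rabs_mult, Rabs_Ropp.
    assert (Hz' : c <= z) by (unfold Rmin, Rmax in Hz; destruct Rle_dec in Hz; lra).
    rewrite Rabs_pos_eq by (apply kk_nonneg; lra).
    apply Rmult_le_compat_r. apply Rabs_pos. apply kk_anti; lra.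
Qed.

Lemma sqrt_diff s s0 w : 0 < s -> 0 < s0 ->
  Rabs (sqrt (s ^ 2 + w ^ 2) - sqrt (s0 ^ 2 + w ^ 2)) <= Rabs (s - s0).
Proof.
  intros Hs Hs0.
  set (A := sqrt (s ^ 2 + w ^ 2)). set (B := sqrt (s0 ^ 2 + w ^ 2)).
  assert (HA : A ^ 2 = s ^ 2 + w ^ 2) by (apply pow2_sqrt; nra).
  assert (HB : B ^ 2 = s0 ^ 2 + w ^ 2) by (apply pow2_sqrt; nra).
  pose proof (sqrt_ge_s s w Hs). pose proof (sqrt_ge_s s0 w Hs0). fold A B in H, H0.
  assert (HAB : (A - B) * (A + B) = (s - s0) * (s + s0)) by nra.
  unfold Rabs; repeat destruct Rcase_abs; nra.
Qed.

Lemma J_cont s0 : 0 < s0 -> continuity_pt J s0.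
Proof.
  intros Hs0. unfold continuity_pt, continue_in, limit1_in, limit_in. intros eps He. simpl.
  set (L := kk 4 (s0 / 2)). assert (HL : 0 <= L) by (apply kk_nonneg; lra).
  set (W := 1 + 96 / eps). assert (HW : 1 <= W) by (unfold W; assert (0 < 96 / eps) by (apply Rdiv_lt_0_compat; lra); lra).
  assert (HWt : 32 / W ^ 3 < eps / 3).
  { assert (HW3 : W <= W ^ 3) by (simpl; nra).
    assert (32 / W ^ 3 <= 32 / W) by (unfold Rdiv; apply Rmult_le_compat_l; [lra| apply Rinv_le_contravar; lra]).
    assert (HeW : eps * W = eps + 96) by (unfold W; field; lra).
    assert (32 / W < eps / 3).
    { apply (Rmult_lt_reg_r (3 * W)). lra.
      replace (32 / W * (3 * W)) with 96 by (field; lra).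
      replace (eps / 3 * (3 * W)) with (eps * W) by field. lra. }
    lra. }
  exists (Rmin (s0 / 2) (eps / (3 * (W * L + 1)))). split.
  { apply Rmin_pos. lra. apply Rdiv_lt_0_compat. lra. nra. }
  intros s [_ Hs]. unfold R_dist in *.
  pose proof (Rmin_l (s0 / 2) (eps / (3 * (W * L + 1)))). pose proof (Rmin_r (s0 / 2) (eps / (3 * (W * L + 1)))).
  assert (Hsp : s0 / 2 < s) by (apply Rabs_def2 in Hs; lra).
  assert (Hsp' : 0 < s) by lra.
  pose proof (J_tail s W Hsp' HW). pose proof (J_ge s W Hsp' ltac:(lra)).
  pose proof (J_tail s0 W Hs0 HW). pose proof (J_ge s0 W Hs0 ltac:(lra)).
  assert (Hd : Rabs (RInt (fs s) 0 W - RInt (fs s0) 0 W) <= (W - 0) * (L * Rabs (s - s0))).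
  { rewrite <- RInt_minus_R by (apply fs_exRI; auto).
    apply abs_RInt_le_const. lra.
    apply (ex_RInt_minus (V:=R_CompleteNormedModule)); apply fs_exRI; auto.
    intros w Hw. unfold fs. eapply Rle_trans. apply kk3_lip with (c := s0 / 2). lra.
    pose proof (sqrt_ge_s s w Hsp'). lra. pose proof (sqrt_ge_s s0 w Hs0). lra.
    apply Rmult_le_compat_l; auto. apply sqrt_diff; auto. }
  assert (W * (L * Rabs (s - s0)) <= W * L * (eps / (3 * (W * L + 1)))).
  { rewrite <- Rmult_assoc. apply Rmult_le_compat_l. nra. lra. }
  assert (W * L * (eps / (3 * (W * L + 1))) < eps / 3).
  { apply Rmult_lt_reg_r with (3 * (W * L + 1)). nra.
    replace (W * L * (eps / (3 * (W * L + 1))) * (3 * (W * L + 1))) with (W * L * eps) by (field; nra).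
    nra. }
  apply Rabs_le_inv in Hd. apply Rabs_def1; lra.
Qed.

Lemma g_cont s : 0 < s -> continuous g s.
Proof.
  intros Hs. apply (continuous_ext_loc g (fun s => s / (4 * PI) * J s) s).
  - generalize (locally_gt 0 s Hs). apply filter_imp. intros y Hy. symmetry. apply g_eq; auto.
  - apply (continuous_mult (K:=R_AbsRing) (fun s => s / (4 * PI)) J).
    + apply (ex_derive_continuous (V:=R_NormedModule)). auto_derive. auto.
    + apply continuity_pt_filterlim, J_cont; auto.
Qed.

Lemma dpl_scal c (f : R -> R) x l : derivable_pt_lim f x l -> derivable_pt_lim (fun y => c * f y) x (c * l).
Proof. intros H. apply is_derive_Reals. apply is_derive_scal. apply is_derive_Reals; auto. Qed.

Lemma dpl_mult (f g : R -> R) x lf lg : derivable_pt_lim f x lf -> derivable_pt_lim g x lg ->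
  derivable_pt_lim (fun y => f y * g y) x (lf * g x + f x * lg).
Proof. intros H1 H2. exact (derivable_pt_lim_mult f g x lf lg H1 H2). Qed.

Lemma dpl_plus (f g : R -> R) x lf lg : derivable_pt_lim f x lf -> derivable_pt_lim g x lg ->
  derivable_pt_lim (fun y => f y + g y) x (lf + lg).
Proof. intros H1 H2. exact (derivable_pt_lim_plus f g x lf lg H1 H2). Qed.

Lemma dpl_minus (f g : R -> R) x lf lg : derivable_pt_lim f x lf -> derivable_pt_lim g x lg ->
  derivable_pt_lim (fun y => f y - g y) x (lf - lg).
Proof. intros H1 H2. exact (derivable_pt_lim_minus f g x lf lg H1 H2). Qed.

Lemma dpl_exp (f : R -> R) x l : derivable_pt_lim f x l -> derivable_pt_lim (fun y => exp (f y)) x (l * exp (f x)).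
Proof. intros H. rewrite Rmult_comm. exact (derivable_pt_lim_comp f exp x l (exp (f x)) H (derivable_pt_lim_exp (f x))). Qed.

Lemma dpl_pow (f : R -> R) n x l : derivable_pt_lim f x l -> derivable_pt_lim (fun y => f y ^ n) x (INR n * l * f x ^ pred n).
Proof. intros H. apply is_derive_Reals. apply is_derive_pow. apply is_derive_Reals; auto. Qed.

Lemma dpl_ext (f g : R -> R) x l : (forall y, f y = g y) -> derivable_pt_lim f x l -> derivable_pt_lim g x l.
Proof. intros E H. replace g with f; auto. apply functional_extensionality; auto. Qed.

Lemma Bf_cont beta s : 0 < s -> continuous (Bf beta) s.
Proof.
  intros Hs. unfold Bf. apply (continuous_mult (K:=R_AbsRing) (fun _ => beta / 2) g).
  apply continuous_const. apply g_cont; auto.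
Qed.

Lemma Gam_cont beta s : 0 < s -> continuous (Gam beta) s.
Proof.
  intros Hs. unfold Gam. apply (continuous_mult (K:=R_AbsRing) (fun s => beta * PI / 4 * s ^ 2) g).
  apply (ex_derive_continuous (V:=R_NormedModule)). auto_derive. auto. apply g_cont; auto.
Qed.

Lemma Bf_nonneg beta s : 0 < beta -> 0 < s -> 0 <= Bf beta s.
Proof. intros Hb Hs. unfold Bf. apply Rmult_le_pos. lra. apply g_nonneg; auto. Qed.

Lemma Gam_nonneg beta s : 0 < beta -> 0 < s -> 0 <= Gam beta s.
Proof.
  intros Hb Hs. unfold Gam. pose proof PI_RGT_0. apply Rmult_le_pos.
  apply Rmult_le_pos. apply Rmult_le_pos. apply Rmult_le_pos; lra. lra. apply pow_le; lra.
  apply g_nonneg; auto.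
Qed.

Lemma exRI_pos (f : R -> R) a b : (forall x, 0 < x -> continuous f x) -> 0 < a -> 0 < b -> ex_RInt f a b.
Proof.
  intros Hc Ha Hb. apply (ex_RInt_continuous (V:=R_CompleteNormedModule)). intros z Hz. apply Hc.
  destruct Hz as [Hz _]. apply Rlt_le_trans with (2 := Hz). unfold Rmin; destruct Rle_dec; lra.
Qed.

Lemma RInt_deriv_pos (f : R -> R) a u : (forall x, 0 < x -> continuous f x) -> 0 < a -> 0 < u ->
  derivable_pt_lim (fun v => RInt f a v) u (f u).
Proof.
  intros Hc Ha Hu. apply is_derive_Reals.
  apply (is_derive_RInt (V:=R_CompleteNormedModule) f (fun v => RInt f a v) a u).
  - generalize (locally_gt 0 u Hu). apply filter_imp. intros y Hy.
    apply (RInt_correct (V:=R_CompleteNormedModule)). apply exRI_pos; auto.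
  - apply Hc; auto.
Qed.

Definition bet beta t0 u := RInt (Bf beta) t0 u.
Definition Hf beta t0 c u := RInt (fun s => Gam beta s * exp (- c * bet beta t0 s)) t0 u.
Definition tauf beta t0 c u := exp (c * bet beta t0 u) * Hf beta t0 c u.

Lemma bet_deriv beta t0 u : 0 < t0 -> 0 < u -> derivable_pt_lim (bet beta t0) u (Bf beta u).
Proof. intros. apply RInt_deriv_pos; auto. intros; apply Bf_cont; auto. Qed.

Lemma bet_cont beta t0 u : 0 < t0 -> 0 < u -> continuous (bet beta t0) u.
Proof.
  intros H1 H2. apply continuity_pt_filterlim, derivable_continuous_pt.
  exists (Bf beta u). apply bet_deriv; auto.
Qed.

Lemma Hint_cont beta t0 c s : 0 < t0 -> 0 < s -> continuous (fun s => Gam beta s * exp (- c * bet beta t0 s)) s.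
Proof.
  intros H1 H2. apply (continuous_mult (K:=R_AbsRing) (Gam beta) (fun s => exp (- c * bet beta t0 s))).
  apply Gam_cont; auto.
  apply (continuous_comp (fun s => - c * bet beta t0 s) exp).
  apply (continuous_mult (K:=R_AbsRing) (fun _ => - c) (bet beta t0)). apply continuous_const. apply bet_cont; auto.
  apply (ex_derive_continuous (V:=R_NormedModule)). auto_derive. auto.
Qed.

Lemma Hf_deriv beta t0 c u : 0 < t0 -> 0 < u -> derivable_pt_lim (Hf beta t0 c) u (Gam beta u * exp (- c * bet beta t0 u)).
Proof.
  intros H1 H2. unfold Hf. apply (RInt_deriv_pos (fun s => Gam beta s * exp (- c * bet beta t0 s))); auto.
  intros; apply Hint_cont; auto.
Qed.

Lemma tauf_deriv beta t0 c u : 0 < t0 -> 0 < u ->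
  derivable_pt_lim (tauf beta t0 c) u (c * Bf beta u * tauf beta t0 c u + Gam beta u).
Proof.
  intros H1 H2. unfold tauf.
  replace (c * Bf beta u * (exp (c * bet beta t0 u) * Hf beta t0 c u) + Gam beta u) with
    (exp (c * bet beta t0 u) * (c * Bf beta u) * Hf beta t0 c u + exp (c * bet beta t0 u) * (Gam beta u * exp (- c * bet beta t0 u))).
  2:{ replace (Gam beta u) with (Gam beta u * (exp (c * bet beta t0 u) * exp (- c * bet beta t0 u))) at 2.
      ring. rewrite <- exp_plus. replace (c * bet beta t0 u + - c * bet beta t0 u) with 0 by ring. rewrite exp_0. ring. }
  apply (dpl_mult (fun u => exp (c * bet beta t0 u)) (Hf beta t0 c)).
  - replace (exp (c * bet beta t0 u) * (c * Bf beta u)) with ((c * Bf beta u) * exp (c * bet beta t0 u)) by ring.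
    apply (dpl_exp (fun u => c * bet beta t0 u)). apply dpl_scal. apply bet_deriv; auto.
  - apply Hf_deriv; auto.
Qed.

Lemma tauf_t0 beta t0 c : tauf beta t0 c t0 = 0.
Proof. unfold tauf, Hf. rewrite RInt_point. unfold zero; simpl. ring. Qed.

Lemma tauf_nonneg beta t0 c u : 0 < beta -> 0 < t0 -> t0 <= u -> 0 <= tauf beta t0 c u.
Proof.
  intros Hb H1 H2. unfold tauf. apply Rmult_le_pos. apply Rlt_le, exp_pos.
  unfold Hf. apply RInt_ge_0; auto. apply exRI_pos; try lra. intros; apply Hint_cont; auto.
  intros x Hx. apply Rmult_le_pos. apply Gam_nonneg; lra. apply Rlt_le, exp_pos.
Qed.

Lemma tauf_cont beta t0 c u : 0 < t0 -> 0 < u -> continuity_pt (tauf beta t0 c) u.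
Proof. intros. apply derivable_continuous_pt. eexists. apply tauf_deriv; auto. Qed.

Lemma tau_eq beta k t0 t : 0 < t0 -> t0 < t ->
  tau beta k t0 t = tauf beta t0 ((INR k + 1) / INR k) t.
Proof.
  intros H1 H2. set (c := (INR k + 1) / INR k).
  set (nice := fun s => exp (c * bet beta t0 t) * (Gam beta s * exp (- c * bet beta t0 s))).
  assert (Hnice : ex_RInt nice t0 t).
  { apply exRI_pos; try lra. intros x Hx. unfold nice.
    apply (continuous_mult (K:=R_AbsRing) (fun _ => exp (c * bet beta t0 t))). apply continuous_const.
    apply Hint_cont; auto. }
  set (F := fun s => Gam beta s * exp (c * Defs.RInt (Bf beta) s t)).
  assert (Heq : forall s, t0 < s < t -> nice s = F s).
  { intros s Hs. unfold nice, F.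
    rewrite RInt_DefsRInt.
    2:{ apply ex_RInt_Reals_0, exRI_pos; try lra. intros; apply Bf_cont; auto. }
    assert (E : RInt (Bf beta) s t = bet beta t0 t - bet beta t0 s).
    { unfold bet. pose proof (RInt_Chasles_R (Bf beta) t0 s t) as HC.
      assert (ex_RInt (Bf beta) t0 s) by (apply exRI_pos; try lra; intros; apply Bf_cont; auto).
      assert (ex_RInt (Bf beta) s t) by (apply exRI_pos; try lra; intros; apply Bf_cont; auto).
      specialize (HC H H0). lra. }
    rewrite E. replace (c * (bet beta t0 t - bet beta t0 s)) with (c * bet beta t0 t + - c * bet beta t0 s) by ring.
    rewrite exp_plus. ring. }
  assert (HF : ex_RInt F t0 t).
  { apply (ex_RInt_ext nice). rewrite Rmin_left, Rmax_right by lra. auto. auto. }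
  unfold tau. fold F. rewrite RInt_DefsRInt by (apply ex_RInt_Reals_0; auto).
  rewrite <- (RInt_ext nice) by (rewrite Rmin_left, Rmax_right by lra; auto).
  unfold nice. rewrite RInt_scal_R. reflexivity.
  apply exRI_pos; try lra. intros; apply Hint_cont; auto.
Qed.

Fixpoint btab (N : nat) : nat -> R :=
  match N with
  | O => fun _ => 1
  | S N' => fun m => if (Nat.leb m N' || Nat.leb m 1)%bool then btab N' m
            else INR m / 2 / INR (m - 1) * sum_f_R0 (fun j => btab N' (S j) * btab N' (m - S j)) (m - 2)
  end.
Definition aa (n : nat) : R := btab n n.

Lemma btab_stable N m : (m <= N)%nat -> btab N m = aa m.
Proof.
  induction N; intros Hm.
  - assert (m = 0%nat) by lia. subst. reflexivity.
  - destruct (Nat.eq_dec m (S N)) as [E|E]. subst. reflexivity.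
    simpl. replace (Nat.leb m N) with true by (symmetry; apply Nat.leb_le; lia). simpl. apply IHN. lia.
Qed.

Lemma aa1 : aa 1 = 1.
Proof. reflexivity. Qed.
Lemma aa0 : aa 0 = 1.
Proof. reflexivity. Qed.

Lemma btab_S N m : btab (S N) m = if (Nat.leb m N || Nat.leb m 1)%bool then btab N m
            else INR m / 2 / INR (m - 1) * sum_f_R0 (fun j => btab N (S j) * btab N (m - S j)) (m - 2).
Proof. reflexivity. Qed.

Lemma aa_def n : (2 <= n)%nat ->
  aa n = INR n / 2 / INR (n - 1) * sum_f_R0 (fun j => aa (S j) * aa (n - S j)) (n - 2).
Proof.
  intros Hn. destruct n as [|N]. lia. unfold aa at 1. rewrite btab_S.
  replace (Nat.leb (S N) N) with false by (symmetry; apply Nat.leb_gt; lia).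
  replace (Nat.leb (S N) 1) with false by (symmetry; apply Nat.leb_gt; lia). simpl orb. cbv iota beta.
  f_equal. apply sum_eq. intros i Hi. rewrite !btab_stable by lia. reflexivity.
Qed.

Lemma aa_rec n : (2 <= n)%nat ->
  INR (n - 1) * aa n = INR n / 2 * sum_f_R0 (fun j => aa (S j) * aa (n - S j)) (n - 2).
Proof.
  intros Hn. rewrite aa_def by auto.
  assert (0 < INR (n - 1)) by (apply lt_0_INR; lia). field. lra.
Qed.

Lemma sum_nonneg (f : nat -> R) N : (forall i, (i <= N)%nat -> 0 <= f i) -> 0 <= sum_f_R0 f N.
Proof.
  induction N; intros H; simpl. apply H; lia.
  apply Rplus_le_le_0_compat. apply IHN; intros; apply H; lia. apply H; lia.
Qed.

Lemma sum_le (f g : nat -> R) N : (forall i, (i <= N)%nat -> f i <= g i) -> sum_f_R0 f N <= sum_f_R0 g N.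
Proof.
  induction N; intros H; simpl. apply H; lia.
  apply Rplus_le_compat. apply IHN; intros; apply H; lia. apply H; lia.
Qed.

Lemma aa_nonneg n : 0 <= aa n.
Proof.
  induction n as [n IH] using (well_founded_induction Wf_nat.lt_wf).
  destruct (le_lt_dec 2 n).
  - rewrite aa_def by auto. apply Rmult_le_pos.
    apply Rmult_le_pos. apply Rmult_le_pos. apply pos_INR. lra.
    apply Rlt_le, Rinv_0_lt_compat, lt_0_INR; lia.
    apply sum_nonneg. intros j Hj. apply Rmult_le_pos; apply IH; lia.
  - destruct n as [|[|n]]. rewrite aa0; lra. rewrite aa1; lra. lia.
Qed.

Lemma sum_rev (f : nat -> R) k : sum_f_R0 f k = sum_f_R0 (fun p => f (k - p)%nat) k.
Proof.
  revert f. induction k; intros f. reflexivity.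
  rewrite decomp_sum by lia. simpl Init.Nat.pred. rewrite (IHk (fun i => f (S i))).
  rewrite tech5. replace (S k - S k)%nat with 0%nat by lia.
  rewrite Rplus_comm. f_equal. apply sum_eq. intros i Hi. f_equal. lia.
Qed.

Lemma aa_exprec k : INR (S k) * aa (S (S k)) = sum_f_R0 (fun p => INR (S p) * aa (S p) * aa (S k - p)%nat) k.
Proof.
  pose proof (aa_rec (S (S k)) ltac:(lia)) as H.
  replace (S (S k) - 1)%nat with (S k) in H by lia. replace (S (S k) - 2)%nat with k in H by lia.
  set (X := sum_f_R0 (fun p => INR (S p) * aa (S p) * aa (S k - p)%nat) k).
  assert (HX : X = sum_f_R0 (fun p => INR (S k - p) * aa (S k - p)%nat * aa (S p)) k).
  { unfold X. rewrite sum_rev. apply sum_eq. intros i Hi.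
    replace (S (k - i)) with (S k - i)%nat by lia. replace (S k - (k - i))%nat with (S i) by lia. ring. }
  assert (H2 : X + X = INR (S (S k)) * sum_f_R0 (fun j => aa (S j) * aa (S (S k) - S j)%nat) k).
  { rewrite HX at 2. unfold X. rewrite <- sum_plus. rewrite scal_sum. apply sum_eq. intros i Hi.
    replace (S (S k) - S i)%nat with (S k - i)%nat by lia.
    rewrite minus_INR by lia. rewrite !S_INR. ring. }
  rewrite H. lra.
Qed.

Lemma sum_mul_0 (c : nat -> R) N : sum_f_R0 (fun n => c n * 0 ^ n) N = c 0%nat.
Proof. induction N. simpl; ring. rewrite tech5, IHN. simpl. ring. Qed.

Lemma CF (A B : nat -> R) M : (forall i, 0 <= A i) -> (forall i, 0 <= B i) ->
  sum_f_R0 (fun k => sum_f_R0 (fun p => A p * B (k - p)%nat) k) M <= sum_f_R0 A M * sum_f_R0 B M.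
Proof.
  intros HA HB. destruct M. simpl. lra.
  rewrite cauchy_finite by lia.
  assert (0 <= sum_f_R0 (fun k => sum_f_R0 (fun l => A (S (l + k)) * B (S M - l)%nat) (Init.Nat.pred (S M - k))) (Init.Nat.pred (S M))).
  { apply cond_pos_sum. intros. apply cond_pos_sum. intros. apply Rmult_le_pos; auto. }
  lra.
Qed.

Definition Sa (N : nat) (y : R) := sum_f_R0 (fun n => aa (S n) * y ^ n) N.
Definition pc (j : nat) : R := match j with O => 0 | _ => aa j end.
Definition Pa (N : nat) (y : R) := sum_f_R0 (fun j => pc j * y ^ j) N.

Lemma Pa_S N y : Pa (S N) y = y * Sa N y.
Proof.
  induction N. unfold Pa, Sa. simpl. ring.
  unfold Pa in *. rewrite tech5, IHN. unfold Sa. rewrite tech5. simpl pc. simpl pow. ring.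
Qed.

Lemma Sa_le_exp N y : 0 <= y -> Sa N y <= exp (Pa N y).
Proof.
  intros Hy.
  destruct N as [|N].
  { unfold Sa, Pa. simpl. rewrite aa1, Rmult_0_l, exp_0. lra. }
  set (Rf := fun y => Sa (S N) y * exp (- Pa (S N) y)).
  assert (HR0 : Rf 0 = 1).
  { unfold Rf, Sa, Pa. rewrite !sum_mul_0. simpl. rewrite Ropp_0, exp_0. rewrite aa1. ring. }
  set (dQ := fun y => sum_f_R0 (fun k => INR (S k) * aa (S (S k)) * y ^ k) N).
  set (dP := fun y => sum_f_R0 (fun k => INR (S k) * pc (S k) * y ^ k) N).
  assert (DQ : forall y, derivable_pt_lim (Sa (S N)) y (dQ y)).
  { intros z. exact (derivable_pt_lim_finite_sum (fun n => aa (S n)) z (S N)). }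
  assert (DP : forall y, derivable_pt_lim (Pa (S N)) y (dP y)).
  { intros z. exact (derivable_pt_lim_finite_sum pc z (S N)). }
  assert (DR : forall y, derivable_pt_lim Rf y ((dQ y - dP y * Sa (S N) y) * exp (- Pa (S N) y))).
  { intros z. unfold Rf.
    replace ((dQ z - dP z * Sa (S N) z) * exp (- Pa (S N) z)) with
      (dQ z * exp (- Pa (S N) z) + Sa (S N) z * (exp (- Pa (S N) z) * (- dP z))) by ring.
    apply (derivable_pt_lim_mult (Sa (S N)) (fun y => exp (- Pa (S N) y))). apply DQ.
    apply (derivable_pt_lim_comp (fun y => - Pa (S N) y) exp). apply derivable_pt_lim_opp. apply DP.
    apply derivable_pt_lim_exp. }
  assert (Hneg : forall z, 0 <= z -> dQ z <= dP z * Sa (S N) z).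
  { intros z Hz.
    assert (E : dQ z = sum_f_R0 (fun k => sum_f_R0 (fun p => (INR (S p) * aa (S p) * z ^ p) * (aa (S (k - p)) * z ^ (k - p))) k) N).
    { unfold dQ. apply sum_eq. intros k Hk. rewrite aa_exprec, Rmult_comm, scal_sum. apply sum_eq. intros p Hp.
      replace (S k - p)%nat with (S (k - p)) by lia.
      replace (z ^ k) with (z ^ p * z ^ (k - p)) by (rewrite <- pow_add; f_equal; lia). ring. }
    rewrite E. eapply Rle_trans. apply (CF (fun p => INR (S p) * aa (S p) * z ^ p) (fun m => aa (S m) * z ^ m)).
    intros i. apply Rmult_le_pos. apply Rmult_le_pos. apply pos_INR. apply aa_nonneg. apply pow_le; auto.
    intros i. apply Rmult_le_pos. apply aa_nonneg. apply pow_le; auto.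
    assert (Hdp : dP z = sum_f_R0 (fun p => INR (S p) * aa (S p) * z ^ p) N) by reflexivity.
    rewrite <- Hdp.
    assert (0 <= dP z) by (rewrite Hdp; apply cond_pos_sum; intros; apply Rmult_le_pos; [apply Rmult_le_pos; [apply pos_INR | apply aa_nonneg] | apply pow_le; auto]).
    apply Rmult_le_compat_l; auto. unfold Sa. rewrite tech5.
    assert (0 <= aa (S (S N)) * z ^ S N) by (apply Rmult_le_pos; [apply aa_nonneg | apply pow_le; auto]).
    lra. }
  destruct (Req_dec y 0) as [E|E].
  { subst. unfold Sa, Pa. rewrite !sum_mul_0. simpl. rewrite aa1, exp_0. lra. }
  destruct (MVT_cor2 Rf (fun y => (dQ y - dP y * Sa (S N) y) * exp (- Pa (S N) y)) 0 y) as [c [Hc Hc2]].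
  lra. intros; apply DR.
  assert (Rf y <= 1).
  { rewrite <- HR0. assert ((dQ c - dP c * Sa (S N) c) * exp (- Pa (S N) c) <= 0).
    { assert (Hd : dQ c - dP c * Sa (S N) c <= 0) by (pose proof (Hneg c ltac:(lra)); lra). pose proof (exp_pos (- Pa (S N) c)). nra. }
    nra. }
  unfold Rf in H.
  assert (exp (- Pa (S N) y) * exp (Pa (S N) y) = 1) by (rewrite <- exp_plus; replace (- Pa (S N) y + Pa (S N) y) with 0 by ring; apply exp_0).
  pose proof (exp_pos (Pa (S N) y)). nra.
Qed.

Lemma exp_le9 x y : x <= y -> exp x <= exp y.
Proof. intros [H|H]. left; apply exp_increasing; auto. subst; lra. Qed.

Lemma Sa_bound_T x T : 0 < x -> x * exp T = T -> 0 <= T -> forall N, x * Sa N x <= T.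
Proof.
  intros Hx HT HT0 N. induction N.
  - unfold Sa. simpl. rewrite aa1. replace (x * (1 * 1)) with x by ring.
    rewrite <- HT. assert (1 <= exp T) by (pose proof (exp_ineq1_le T); lra). nra.
  - rewrite <- HT. apply Rmult_le_compat_l. lra.
    eapply Rle_trans. apply Sa_le_exp; lra. rewrite Pa_S. apply exp_le9; auto.
Qed.

Lemma mono_lemma (f f' : R -> R) a b : a < b ->
  (forall x, a <= x <= b -> continuity_pt f x) ->
  (forall x, a < x < b -> derivable_pt_lim f x (f' x)) ->
  (forall x, a < x < b -> 0 <= f' x) -> f a <= f b.
Proof.
  intros Hab Hc Hd Hp.
  assert (pr1 : forall c, a < c < b -> derivable_pt f c) by (intros c Hc'; exists (f' c); apply Hd; auto).
  assert (pr2 : forall c, a < c < b -> derivable_pt id c) by (intros; apply derivable_pt_id).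
  destruct (MVT f id a b pr1 pr2 Hab Hc) as [c [P Heq]].
  intros; apply derivable_continuous_pt, derivable_pt_id.
  rewrite (derive_pt_eq_0 f c (f' c) (pr1 c P) (Hd c P)) in Heq.
  rewrite (derive_pt_eq_0 id c 1 (pr2 c P) (derivable_pt_lim_id c)) in Heq.
  unfold id in Heq. pose proof (Hp c P). nra.
Qed.

Definition clamp a b x := Rmax a (Rmin b x).

Lemma clamp_in a b x : a <= b -> a <= clamp a b x <= b.
Proof. intros H. unfold clamp, Rmax, Rmin. repeat destruct Rle_dec; lra. Qed.

Lemma clamp_id a b x : a <= x <= b -> clamp a b x = x.
Proof. intros H. unfold clamp, Rmax, Rmin. repeat destruct Rle_dec; lra. Qed.

Lemma clamp_lip a b x y : a <= b -> Rabs (clamp a b x - clamp a b y) <= Rabs (x - y).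
Proof. intros H. unfold clamp, Rmax, Rmin. unfold Rabs. repeat destruct Rle_dec; repeat destruct Rcase_abs; lra. Qed.

Lemma clamp_cont (f : R -> R) a b : a <= b -> (forall s, a <= s <= b -> cont_on_at f a b s) ->
  forall x, a <= x <= b -> continuity_pt (fun y => f (clamp a b y)) x.
Proof.
  intros Hab Hf x Hx. unfold continuity_pt, continue_in, limit1_in, limit_in. intros eps He.
  destruct (Hf x Hx eps He) as [alp [Halp H]]. exists alp. split; auto.
  intros y [_ Hy]. simpl in *. unfold R_dist in *. rewrite (clamp_id a b x Hx).
  apply H. split. apply clamp_in; auto. simpl. unfold R_dist.
  pose proof (clamp_lip a b y x Hab) as HL. rewrite (clamp_id a b x Hx) in HL. lra.
Qed.

Lemma locally_in a b x : a < x < b -> locally x (fun y => a < y < b).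
Proof.
  intros H. assert (Hp : 0 < Rmin (x - a) (b - x)) by (apply Rmin_pos; lra).
  exists (mkposreal _ Hp). intros y Hy.
  unfold ball in Hy; simpl in Hy. unfold AbsRing_ball, abs, minus, plus, opp in Hy; simpl in Hy.
  apply Rabs_def2 in Hy. pose proof (Rmin_l (x - a) (b - x)). pose proof (Rmin_r (x - a) (b - x)). lra.
Qed.

Lemma clamp_deriv (f : R -> R) a b x l : a < x < b -> derivable_pt_lim f x l ->
  derivable_pt_lim (fun y => f (clamp a b y)) x l.
Proof.
  intros Hx H. apply is_derive_Reals. apply is_derive_Reals in H.
  apply (is_derive_ext_loc f); auto.
  generalize (locally_in a b x Hx). apply filter_imp. intros y Hy. rewrite clamp_id; auto; lra.
Qed.

Lemma cpt_mult (f g : R -> R) x : continuity_pt f x -> continuity_pt g x -> continuity_pt (fun y => f y * g y) x.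
Proof. intros H1 H2. exact (continuity_pt_mult f g x H1 H2). Qed.
Lemma cpt_minus (f g : R -> R) x : continuity_pt f x -> continuity_pt g x -> continuity_pt (fun y => f y - g y) x.
Proof. intros H1 H2. exact (continuity_pt_minus f g x H1 H2). Qed.
Lemma cpt_exp (f : R -> R) x : continuity_pt f x -> continuity_pt (fun y => exp (f y)) x.
Proof. intros H1. exact (continuity_pt_comp f exp x H1 (derivable_continuous_pt _ _ (derivable_pt_exp _))). Qed.
Lemma cpt_const c x : continuity_pt (fun _ => c) x.
Proof. apply continuity_pt_const. intros a b; reflexivity. Qed.
Lemma cpt_pow (f : R -> R) n x : continuity_pt f x -> continuity_pt (fun y => f y ^ n) x.
Proof.
  intros H. induction n. simpl. apply cpt_const.
  simpl. apply cpt_mult; auto.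
Qed.

Lemma comparison (t0 t : R) (C : nat -> R -> R) (B G tau bb : R -> R) (c : R) :
  t0 < t -> 1 <= c ->
  (forall s, t0 <= s <= t -> 0 <= B s) -> (forall s, t0 <= s <= t -> 0 <= G s) ->
  (forall s, t0 <= s <= t -> 0 <= tau s) -> tau t0 = 0 ->
  (forall s, t0 < s < t -> derivable_pt_lim tau s (c * B s * tau s + G s)) ->
  (forall s, t0 <= s <= t -> continuity_pt tau s) ->
  (forall s, t0 < s < t -> derivable_pt_lim bb s (B s)) ->
  (forall s, t0 <= s <= t -> continuity_pt bb s) ->
  (forall s, t0 <= s <= t -> C 1%nat s = 1) ->
  (forall n s, (2 <= n)%nat -> t0 <= s <= t -> cont_on_at (C n) t0 t s) ->
  (forall n s, (2 <= n)%nat -> t0 < s < t ->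
     derivable_pt_lim (C n) s
       (INR (n - 1) * B s * C n s
        + INR n * G s / 2 *
          sum_f_R0 (fun j => C (S j) s * C (n - S j)%nat s) (n - 2))) ->
  (forall n, (2 <= n)%nat -> C n t0 = 0) ->
  forall n, (1 <= n)%nat -> forall u, t0 <= u <= t -> 0 <= C n u <= aa n * tau u ^ (n - 1).
Proof.
  intros Htt Hc HB HG Htau Htau0 Dtau Ctau Dbb Cbb HC1 Hcont Hode Hinit.
  intros n. induction n as [n IH] using (well_founded_induction Wf_nat.lt_wf). intros Hn u Hu.
  destruct n as [|[|m]]. lia.
  { rewrite HC1 by auto. rewrite aa1. simpl. lra. }
  set (n := S (S m)). replace (n - 1)%nat with (S m) by (unfold n; lia).
  set (Ssum := fun s => sum_f_R0 (fun j => C (S j) s * C (n - S j)%nat s) m).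
  set (Asum := sum_f_R0 (fun j => aa (S j) * aa (n - S j)%nat) m).
  assert (Hsum : forall s, t0 <= s <= t -> 0 <= Ssum s <= Asum * tau s ^ m).
  { intros s Hs. unfold Ssum, Asum. split.
    - apply sum_nonneg. intros j Hj. apply Rmult_le_pos.
      apply (IH (S j) ltac:(unfold n; lia) ltac:(lia) s Hs).
      apply (IH (n - S j)%nat ltac:(unfold n; lia) ltac:(unfold n; lia) s Hs).
    - rewrite (Rmult_comm (sum_f_R0 _ m) (tau s ^ m)), scal_sum. apply sum_le. intros j Hj.
      destruct (IH (S j) ltac:(unfold n; lia) ltac:(lia) s Hs) as [H1 H2].
      destruct (IH (n - S j)%nat ltac:(unfold n; lia) ltac:(unfold n; lia) s Hs) as [H3 H4].
      replace (S j - 1)%nat with j in H2 by lia.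
      replace (n - S j - 1)%nat with (m - j)%nat in H4 by (unfold n; lia).
      replace (tau s ^ m) with (tau s ^ j * tau s ^ (m - j)) by (rewrite <- pow_add; f_equal; lia).
      apply Rle_trans with ((aa (S j) * tau s ^ j) * (aa (n - S j) * tau s ^ (m - j))).
      apply Rmult_le_compat; auto. right; ring. }
  assert (HA : INR (S m) * aa n = INR n / 2 * Asum).
  { unfold Asum. pose proof (aa_rec n ltac:(unfold n; lia)). replace (n - 1)%nat with (S m) in H by (unfold n; lia).
    replace (n - 2)%nat with m in H by (unfold n; lia). exact H. }
  set (Cc := fun y => C n (clamp t0 t y)).
  set (E := fun y => exp (- INR (S m) * bb y)).
  assert (Hode' : forall s, t0 < s < t -> derivable_pt_lim Cc s (INR (S m) * B s * Cc s + INR n * G s / 2 * Ssum s)).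
  { intros s Hs. unfold Cc. rewrite clamp_id by lra. apply clamp_deriv; auto.
    pose proof (Hode n s ltac:(unfold n; lia) Hs). replace (n - 1)%nat with (S m) in H by (unfold n; lia).
    replace (n - 2)%nat with m in H by (unfold n; lia). exact H. }
  assert (HCc : forall s, t0 <= s <= t -> continuity_pt Cc s).
  { intros s Hs. apply clamp_cont; auto. lra. intros; apply Hcont; auto. unfold n; lia. }
  assert (HE : forall s, t0 < s < t -> derivable_pt_lim E s ((- INR (S m) * B s) * E s)).
  { intros s Hs. unfold E. apply (dpl_exp (fun y => - INR (S m) * bb y)). apply dpl_scal. apply Dbb; auto. }
  assert (CE : forall s, t0 <= s <= t -> continuity_pt E s).
  { intros s Hs. unfold E. apply cpt_exp. apply cpt_mult. apply cpt_const. apply Cbb; auto. }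
  assert (HEp : forall s, 0 < E s) by (intros; apply exp_pos).
  assert (HCt0 : Cc t0 = 0) by (unfold Cc; rewrite clamp_id by lra; apply Hinit; unfold n; lia).
  assert (HCu : Cc u = C n u) by (unfold Cc; rewrite clamp_id; auto).
  destruct (Req_dec u t0) as [Eu|Eu].
  { subst u. rewrite <- HCu, HCt0, Htau0. simpl. rewrite Rmult_0_l, Rmult_0_r. lra. }
  assert (Htu : t0 < u) by (destruct (Rle_lt_or_eq_dec t0 u (proj1 Hu)) as [h|h]; [exact h | congruence]).
  split.
  -
    assert (Hm : (fun y => Cc y * E y) t0 <= (fun y => Cc y * E y) u).
    { apply (mono_lemma (fun y => Cc y * E y) (fun s => (INR (S m) * B s * Cc s + INR n * G s / 2 * Ssum s) * E s + Cc s * ((- INR (S m) * B s) * E s)) t0 u).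
      lra.
      intros x Hx. apply cpt_mult. apply HCc; lra. apply CE; lra.
      intros x Hx. apply dpl_mult. apply Hode'; lra. apply HE; lra.
      intros x Hx.
      replace ((INR (S m) * B x * Cc x + INR n * G x / 2 * Ssum x) * E x + Cc x * (- INR (S m) * B x * E x))
        with (INR n / 2 * G x * Ssum x * E x) by field.
      pose proof (HEp x). pose proof (HG x ltac:(lra)). pose proof (Hsum x ltac:(lra)).
      assert (0 <= INR n / 2) by (pose proof (pos_INR n); lra).
      apply Rmult_le_pos. apply Rmult_le_pos. apply Rmult_le_pos; lra. lra. lra. }
    simpl in Hm. rewrite HCt0, HCu in Hm. pose proof (HEp u). nra.
  -
    set (D := fun y => aa n * tau y ^ S m - Cc y).
    assert (HD : forall s, t0 < s < t -> derivable_pt_lim D s (aa n * (INR (S m) * (c * B s * tau s + G s) * tau s ^ m) - (INR (S m) * B s * Cc s + INR n * G s / 2 * Ssum s))).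
    { intros s Hs. unfold D. apply dpl_minus. apply dpl_scal.
      pose proof (dpl_pow tau (S m) s _ (Dtau s Hs)). simpl pred in H. exact H. apply Hode'; auto. }
    assert (Hm : (fun y => D y * E y) t0 <= (fun y => D y * E y) u).
    { apply (mono_lemma (fun y => D y * E y) (fun s => (aa n * (INR (S m) * (c * B s * tau s + G s) * tau s ^ m) - (INR (S m) * B s * Cc s + INR n * G s / 2 * Ssum s)) * E s + D s * ((- INR (S m) * B s) * E s)) t0 u).
      lra.
      intros x Hx. apply cpt_mult. unfold D. apply cpt_minus. apply cpt_mult. apply cpt_const.
      apply cpt_pow. apply Ctau; lra. apply HCc; lra. apply CE; lra.
      intros x Hx. apply dpl_mult. apply HD; lra. apply HE; lra.
      intros x Hx. unfold D.
      assert (Hx' : t0 <= x <= t) by lra.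
      replace ((aa n * (INR (S m) * (c * B x * tau x + G x) * tau x ^ m) - (INR (S m) * B x * Cc x + INR n * G x / 2 * Ssum x)) * E x +
        (aa n * tau x ^ S m - Cc x) * (- INR (S m) * B x * E x))
        with (E x * ((INR (S m) * aa n) * (c - 1) * B x * tau x ^ S m + G x * ((INR (S m) * aa n) * tau x ^ m - INR n / 2 * Ssum x))) by (simpl; field).
      rewrite HA.
      pose proof (HEp x). pose proof (HG x Hx'). pose proof (Hsum x Hx'). pose proof (HB x Hx').
      pose proof (Htau x Hx').
      assert (0 <= INR n / 2) by (pose proof (pos_INR n); lra).
      assert (0 <= Asum) by (unfold Asum; apply sum_nonneg; intros; apply Rmult_le_pos; apply aa_nonneg).
      assert (0 <= tau x ^ S m) by (apply pow_le; auto).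
      apply Rmult_le_pos. lra. apply Rplus_le_le_0_compat.
      apply Rmult_le_pos. apply Rmult_le_pos. apply Rmult_le_pos. apply Rmult_le_pos; auto. lra. auto. auto.
      apply Rmult_le_pos; auto.
      replace (INR n / 2 * Asum * tau x ^ m - INR n / 2 * Ssum x) with (INR n / 2 * (Asum * tau x ^ m - Ssum x)) by ring.
      apply Rmult_le_pos; auto. lra. }
    simpl in Hm. unfold D in Hm. rewrite HCt0, Htau0, HCu in Hm. simpl in Hm.
    pose proof (HEp u). pose proof (HEp t0).
    assert (0 <= (aa n * tau u ^ S m - C n u) * E u) by (rewrite Rmult_0_l, Rmult_0_r, Rminus_0_r, Rmult_0_l in Hm; exact Hm).
    assert (0 <= aa n * tau u ^ S m - C n u).
    { apply Rmult_le_reg_r with (E u); auto. lra. }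
    lra.
Qed.

Lemma negWq_bound x : 0 <= x -> exp 1 * x < 1 -> forall N, Sa N x <= negWq x.
Proof.
  intros Hx H1 N. unfold negWq.
  destruct (Req_EM_T x 0) as [E|E].
  { subst. unfold Sa. rewrite sum_mul_0. rewrite aa1. lra. }
  assert (Hxp : 0 < x) by lra.
  assert (Hex : exists w, -1 <= w /\ w * exp w = - x).
  { assert (Hc : continuity (fun w => w * exp w + x)).
    { intros w. apply cont_of_ex_derive. auto_derive. auto. }
    assert (He1 : exp (-1) * exp 1 = 1) by (rewrite <- exp_plus; replace (-1 + 1) with 0 by ring; apply exp_0).
    pose proof (exp_pos 1). pose proof (exp_pos (-1)).
    destruct (IVT _ (-1) 0 Hc ltac:(lra)) as [w [Hw Hw0]].
    - assert (x < exp (-1)) by nra. lra.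
    - rewrite Rmult_0_l. lra.
    - exists w. split. lra. lra. }
  unfold LambertW.
  destruct (epsilon_spec (inhabits 0) (fun w => -1 <= w /\ w * exp w = - x) Hex) as [Hw1 Hw2].
  set (w := epsilon (inhabits 0) (fun w => -1 <= w /\ w * exp w = - x)) in *.
  assert (Hwneg : w < 0).
  { destruct (Rlt_or_le w 0) as [h|h]; auto. pose proof (exp_pos w). nra. }
  assert (HT : x * exp (- w) = - w).
  { replace x with (- (w * exp w)) by lra. rewrite Ropp_mult_distr_l, Rmult_assoc, <- exp_plus.
    replace (w + - w) with 0 by ring. rewrite exp_0. ring. }
  pose proof (Sa_bound_T x (- w) Hxp HT ltac:(lra) N).
  apply Rmult_le_reg_l with x; auto. replace (x * (- w / x)) with (- w) by (field; lra). auto.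
Qed.

Theorem proposition3p5 (beta t0 t : R) (C : nat -> R -> R) :
  0 < beta -> 0 < t0 -> t0 < t ->
  (* C_1 = 1 on [t0,t] *)
  (forall s, t0 <= s <= t -> C 1%nat s = 1) ->
  (* each C_n is continuous on [t0,t] *)
  (forall n s, (2 <= n)%nat -> t0 <= s <= t -> cont_on_at (C n) t0 t s) ->
  (* ODE on (t0,t) for n >= 2 *)
  (forall n s, (2 <= n)%nat -> t0 < s < t ->
     derivable_pt_lim (C n) s
       (INR (n - 1) * Bf beta s * C n s
        + INR n * Gam beta s / 2 *
          sum_f_R0 (fun j => C (S j) s * C (n - S j)%nat s) (n - 2))) ->
  (* initial conditions *)
  (forall n, (2 <= n)%nat -> C n t0 = 0) ->
  forall (k : nat) (z : R), (1 <= k)%nat -> 0 <= z ->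
    exp 1 * z * tau beta k t0 t < 1 ->
    exists Theta : R,
      infinite_sum (fun n => C (S n) t * z ^ n) Theta /\
      Theta <= negWq (tau beta k t0 t * z).
Proof.
  intros Hb Ht0 Htt HC1 Hcont Hode Hinit k z Hk Hz Hlt.
  set (c := (INR k + 1) / INR k).
  assert (Hc : 1 <= c).
  { unfold c. assert (1 <= INR k) by (apply (le_INR 1); auto).
    apply Rmult_le_reg_r with (INR k). lra. unfold Rdiv. rewrite Rmult_assoc, Rinv_l by lra. lra. }
  pose proof (comparison t0 t C (Bf beta) (Gam beta) (tauf beta t0 c) (bet beta t0) c Htt Hc
    ltac:(intros; apply Bf_nonneg; lra) ltac:(intros; apply Gam_nonneg; lra)
    ltac:(intros; apply tauf_nonneg; lra) (tauf_t0 beta t0 c)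
    ltac:(intros; apply tauf_deriv; lra) ltac:(intros; apply tauf_cont; lra)
    ltac:(intros; apply bet_deriv; lra)
    ltac:(intros s Hs; apply derivable_continuous_pt; exists (Bf beta s); apply bet_deriv; lra)
    HC1 Hcont Hode Hinit) as Hcmp.
  rewrite tau_eq in Hlt |- * by lra. fold c in Hlt |- *.
  set (T := tauf beta t0 c t) in *.
  set (x := T * z).
  assert (HT : 0 <= T) by (apply tauf_nonneg; lra).
  assert (Hx : 0 <= x) by (unfold x; nra).
  assert (Hx1 : exp 1 * x < 1) by (unfold x; replace (exp 1 * (T * z)) with (exp 1 * z * T) by ring; auto).
  set (f := fun n => C (S n) t * z ^ n).
  assert (Hf : forall n, 0 <= f n <= aa (S n) * x ^ n).
  { intros n. destruct (Hcmp (S n) ltac:(lia) t ltac:(lra)) as [H1 H2].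
    replace (S n - 1)%nat with n in H2 by lia. unfold f, x. rewrite Rpow_mult_distr.
    assert (0 <= z ^ n) by (apply pow_le; auto). split. nra.
    replace (aa (S n) * (T ^ n * z ^ n)) with ((aa (S n) * T ^ n) * z ^ n) by ring.
    apply Rmult_le_compat_r; auto. }
  set (U := fun N => sum_f_R0 f N).
  assert (HU : forall N, U N <= negWq x).
  { intros N. eapply Rle_trans. 2: apply (negWq_bound x Hx Hx1 N).
    unfold U, Sa. apply sum_le. intros i _. apply Hf. }
  assert (Hgr : Un_growing U).
  { intros N. unfold U. rewrite tech5. pose proof (Hf (S N)). lra. }
  assert (Hub : has_ub U).
  { exists (negWq x). intros y [N HN]. rewrite HN. apply HU. }
  destruct (growing_cv U Hgr Hub) as [l Hl].
  exists l. split.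
  - exact Hl.
  - apply is_lim_seq_Reals in Hl.
    assert (Rbar_le l (negWq x)).
    { apply is_lim_seq_le with (2 := Hl) (3 := is_lim_seq_const _). apply HU. }
    exact H.
Qed.
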